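(* Let $\beta>\beta_c$ and $0<\delta<\beta$ with $\delta\le\bar\delta(\beta)$. Then the (unique) maximizer $\bar q_{\beta,\delta}$ of $q\mapsto T_\delta(1/\sqrt q)$ on $(0,\infty)$ satisfies $\bar q_{\beta,\delta}>q^*_\delta$.
   Context: $\Gamma_\beta=\frac{e^{-\beta}+e^{-3\beta/2}}{1-e^{-\beta/2}}$, $\beta_c$ the unique positive solution of $\Gamma_\beta=1$. $c_\beta=\frac{1+e^{-\beta/2}}{1-e^{-\beta/2}}$, $\mathcal L(h)=\log\sum_{k\in\mathbb Z}e^{hk}e^{-\beta|k|/2}/c_\beta$ for $|h|<\beta/2$. $\mathcal G(h)=\int_0^1\mathcal L(h(x-\frac12))dx$, $\tilde h(q)$ the unique $h\in[0,\beta)$ with $\mathcal G'(h)=q$; $\mathcal H_\delta(s)=\int_0^1\mathcal L(sx+\delta-\frac\beta2)dx$ for $s\in(-\delta,\beta-\delta)$, $s_\delta(q)$ the unique solution of $\mathcal H_\delta'(s)=q$; $\delta_0(q)=\frac\beta2-\frac{\tilde h(q)}2$; $\psi(q,\delta)=\mathcal G(\tilde h(q))-q\tilde h(q)$ if $0\le\delta\le\delta_0(q)$, $\mathcal H_\delta(s_\delta(q))-qs_\delta(q)$ if $\delta_0(q)<\delta<\beta$; $T_\delta(a)=a\log\Gamma_\beta+a\psi(1/a^2,\delta)$. $q^*_\delta=\inf\{q>0:\delta-\frac\beta2+s_\delta(q)\ge0\}$. $x_\beta$ is the unique solution in $(0,\beta/2)$ of $\mathcal L(x)=-\log\Gamma_\beta$,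 $\bar\delta(\beta)=\beta\wedge\inf\{\delta\in(0,\beta):\mathcal H'_\delta(\frac\beta2-\delta-x_\beta)>0\}$. *)

(* Defs.v *)
From Stdlib Require Import Reals Lra ClassicalEpsilon.
From Coquelicot Require Import Coquelicot.
Open Scope R_scope.

(* "the unique x with P x": chosen by Hilbert's epsilon (arbitrary if none) *)
Definition the_unique (P : R -> Prop) : R := epsilon (inhabits 0) P.

Definition Gamma (beta : R) : R :=
  (exp (- beta) + exp (- (3 * beta / 2))) / (1 - exp (- (beta / 2))).

Definition beta_c : R := the_unique (fun b => 0 < b /\ Gamma b = 1).

Definition c_beta (beta : R) : R :=
  (1 + exp (- (beta / 2))) / (1 - exp (- (beta / 2))).

(* sum_{k in Z} e^{hk} e^{-beta |k|/2}, with the terms k = n (n >= 0)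
   and k = -(n+1) grouped together *)
Definition Zsum (beta h : R) : R :=
  Series (fun n : nat =>
    exp (h * INR n) * exp (- (beta * Rabs (INR n) / 2))
    + exp (h * (- INR (S n))) * exp (- (beta * Rabs (- INR (S n)) / 2))).

Definition L (beta h : R) : R := ln (Zsum beta h / c_beta beta).

Definition G (beta h : R) : R := RInt (fun x => L beta (h * (x - 1/2))) 0 1.

Definition htilde (beta q : R) : R :=
  the_unique (fun h => 0 <= h < beta /\ is_derive (G beta) h q).

Definition H (beta delta s : R) : R :=
  RInt (fun x => L beta (s * x + delta - beta / 2)) 0 1.

Definition s_delta (beta delta q : R) : R :=
  the_unique (fun s => - delta < s < beta - delta /\ is_derive (H beta delta) s q).

Definition delta0 (beta q : R) : R := beta / 2 - htilde beta q / 2.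

Definition psi (beta q delta : R) : R :=
  if Rle_dec delta (delta0 beta q)
  then G beta (htilde beta q) - q * htilde beta q
  else H beta delta (s_delta beta delta q) - q * s_delta beta delta q.

Definition T (beta delta a : R) : R :=
  a * ln (Gamma beta) + a * psi beta (1 / a ^ 2) delta.

(* q*_delta = inf {q > 0 : delta - beta/2 + s_delta(q) >= 0} (in Rbar; +oo if empty) *)
Definition qstar (beta delta : R) : Rbar :=
  Glb_Rbar (fun q => 0 < q /\ delta - beta / 2 + s_delta beta delta q >= 0).

Definition x_beta (beta : R) : R :=
  the_unique (fun x => 0 < x < beta / 2 /\ L beta x = - ln (Gamma beta)).

Definition deltabar (beta : R) : Rbar :=
  Rbar_min (Finite beta)
    (Glb_Rbar (fun delta => 0 < delta < beta /\
       Derive (H beta delta) (beta / 2 - delta - x_beta beta) > 0)).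

Definition Tq (beta delta q : R) : R := T beta delta (1 / sqrt q).

Definition is_maximizer (beta delta q : R) : Prop :=
  0 < q /\ forall q', 0 < q' -> Tq beta delta q' <= Tq beta delta q.

(* Main.v *)
Require Import Defs.
From Stdlib Require Import Reals.
From Coquelicot Require Import Coquelicot.
From Stdlib Require Import Lra Lia Ranalysis5 ClassicalEpsilon.
Open Scope R_scope.

Definition uu (b : R) := exp (- (b / 2)).
Definition Lc (b y : R) := 2 * ln (1 - uu b) - ln (1 - uu b * exp y) - ln (1 - uu b * exp (- y)).
Definition Lp (b y : R) := uu b * exp y / (1 - uu b * exp y) - uu b * exp (- y) / (1 - uu b * exp (- y)).

Lemma uu_pos b : 0 < uu b.
Proof. unfold uu; apply exp_pos. Qed.
Lemma uu_lt1 b : 0 < b -> uu b < 1.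
Proof. intros; unfold uu; rewrite <- exp_0; apply exp_increasing; lra. Qed.

Lemma uexp_lt1 b y : y < b / 2 -> uu b * exp y < 1.
Proof. intros; unfold uu; rewrite <- exp_plus, <- exp_0; apply exp_increasing; lra. Qed.

Lemma exp_mul_INR x n : exp (x * INR n) = exp x ^ n.
Proof.
  induction n. simpl. rewrite Rmult_0_r, exp_0; auto.
  rewrite S_INR, Rmult_plus_distr_l, exp_plus, IHn, Rmult_1_r. simpl. ring.
Qed.

Lemma L_eq b y : 0 < b -> - (b/2) < y < b/2 -> L b y = Lc b y.
Proof.
  intros hb hy. unfold L, Zsum.
  set (a := exp (y - b/2)). set (c := exp (- y - b/2)).
  assert (ha0 : 0 < a) by apply exp_pos. assert (hc0 : 0 < c) by apply exp_pos.
  assert (ha1 : a < 1) by (unfold a; rewrite <- exp_0; apply exp_increasing; lra).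
  assert (hc1 : c < 1) by (unfold c; rewrite <- exp_0; apply exp_increasing; lra).
  assert (HS : is_series (fun n : nat =>
    exp (y * INR n) * exp (- (b * Rabs (INR n) / 2))
    + exp (y * (- INR (S n))) * exp (- (b * Rabs (- INR (S n)) / 2)))
    (/ (1 - a) + c * / (1 - c))).
  { apply (is_series_ext (fun n => plus (a ^ n) (scal c (c ^ n)))).
    - intros n. rewrite S_INR. unfold plus, scal; simpl. unfold mult; simpl.
      rewrite Rabs_Ropp, !Rabs_pos_eq by (generalize (pos_INR n); lra).
      unfold a, c. rewrite <- !exp_mul_INR. rewrite <- !exp_plus.
      set (k := INR n). match goal with |- exp ?A + exp ?B = exp ?C + exp ?D => replace A with C by field; replace B with D by field end; reflexivity.
    - change (/ (1 - a) + c * / (1 - c)) with (plus (/ (1 - a)) (scal c (/ (1 - c)))).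
      apply (@is_series_plus _ R_NormedModule). apply is_series_geom. rewrite Rabs_pos_eq; lra.
      apply (@is_series_scal _ R_NormedModule). apply is_series_geom. rewrite Rabs_pos_eq; lra. }
  rewrite (is_series_unique _ _ HS).
  unfold Lc, c_beta. fold (uu b).
  assert (hu0 := uu_pos b). assert (hu1 := uu_lt1 b hb).
  assert (Ea : uu b * exp y = a) by (unfold uu, a; rewrite <- exp_plus; replace (- (b / 2) + y) with (y - b/2) by field; reflexivity).
  assert (Ec : uu b * exp (- y) = c) by (unfold uu, c; rewrite <- exp_plus; replace (- (b / 2) + - y) with (- y - b/2) by field; reflexivity).
  assert (Eac : a * c = uu b * uu b).
  { unfold a, c, uu. rewrite <- !exp_plus.
    replace (y - b/2 + (-y - b/2)) with (-(b/2) + -(b/2)) by field. reflexivity. }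
  rewrite Ea, Ec.
  replace ((/ (1 - a) + c * / (1 - c)) / ((1 + uu b) / (1 - uu b)))
    with ((1 - uu b) * (1 - uu b) / ((1 - a) * (1 - c))).
  2: { field_simplify_eq. rewrite Rmult_assoc, Eac. ring.
       repeat split; lra. }
  rewrite ln_div by (try apply Rmult_lt_0_compat; lra).
  rewrite !ln_mult by lra. ring.
Qed.

Definition inI (b y : R) := - (b / 2) < y < b / 2.

Lemma inI_neg b y : inI b y -> inI b (- y).
Proof. unfold inI; lra. Qed.

Lemma den_pos b y : inI b y -> 0 < 1 - uu b * exp y.
Proof. intros [h1 h2]. generalize (uexp_lt1 b y h2). lra. Qed.
Lemma den_pos' b y : inI b y -> 0 < 1 - uu b * exp (- y).
Proof. intros h. apply den_pos, inI_neg, h. Qed.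

Lemma Lc_deriv b y : inI b y -> is_derive (Lc b) y (Lp b y).
Proof.
  intros hy. assert (h1 := den_pos b y hy). assert (h2 := den_pos' b y hy).
  unfold Lc, Lp. auto_derive.
  - repeat split; lra.
  - field. lra.
Qed.

Lemma Lp_deriv b y : inI b y -> ex_derive (Lp b) y.
Proof.
  intros hy. assert (h1 := den_pos b y hy). assert (h2 := den_pos' b y hy).
  unfold Lp. auto_derive. repeat split; lra.
Qed.

Lemma exd_cont (f : R -> R) x : ex_derive f x -> continuous f x.
Proof. intros. apply (@ex_derive_continuous R_AbsRing R_NormedModule). auto. Qed.

Lemma Lc_cont b y : inI b y -> continuous (Lc b) y.
Proof. intros; apply exd_cont; eexists; apply Lc_deriv; auto. Qed.
Lemma Lp_cont b y : inI b y -> continuous (Lp b) y.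
Proof. intros; apply exd_cont; apply Lp_deriv; auto. Qed.

Lemma Lc_even b y : Lc b (- y) = Lc b y.
Proof. unfold Lc. rewrite Ropp_involutive. ring. Qed.
Lemma Lp_odd b y : Lp b (- y) = - Lp b y.
Proof. unfold Lp. rewrite Ropp_involutive. ring. Qed.
Lemma Lc_0 b : Lc b 0 = 0.
Proof. unfold Lc. rewrite Ropp_0, exp_0, Rmult_1_r. ring. Qed.
Lemma Lp_0 b : Lp b 0 = 0.
Proof. unfold Lp. rewrite Ropp_0. ring. Qed.

Lemma phi_incr (u z1 z2 : R) : 0 < u -> 0 < z1 < z2 -> u * z2 < 1 ->
  u * z1 / (1 - u * z1) < u * z2 / (1 - u * z2).
Proof.
  intros hu hz hz2. assert (u * z1 < u * z2) by (apply Rmult_lt_compat_l; lra).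
  apply (Rmult_lt_reg_r ((1 - u*z1) * (1 - u*z2))). apply Rmult_lt_0_compat; lra.
  field_simplify; try lra; try nra.
Qed.

Lemma Lp_incr b y1 y2 : inI b y1 -> inI b y2 -> y1 < y2 -> Lp b y1 < Lp b y2.
Proof.
  intros h1 h2 h. unfold Lp.
  assert (hu := uu_pos b).
  assert (A : uu b * exp y1 / (1 - uu b * exp y1) < uu b * exp y2 / (1 - uu b * exp y2)).
  { apply phi_incr; auto. split. apply exp_pos. apply exp_increasing; auto.
    generalize (den_pos b y2 h2); lra. }
  assert (B : uu b * exp (- y2) / (1 - uu b * exp (- y2)) < uu b * exp (- y1) / (1 - uu b * exp (- y1))).
  { apply phi_incr; auto. split. apply exp_pos. apply exp_increasing; lra.
    generalize (den_pos' b y1 h1); lra. }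
  lra.
Qed.

Lemma strict_convex_gen (f f' : R -> R) lo hi :
  (forall y, lo < y < hi -> is_derive f y (f' y)) ->
  (forall y1 y2, lo < y1 -> y1 < y2 -> y2 < hi -> f' y1 < f' y2) ->
  forall y1 y2 t, lo < y1 < hi -> lo < y2 < hi -> y1 <> y2 -> 0 < t < 1 ->
  f (t * y1 + (1 - t) * y2) < t * f y1 + (1 - t) * f y2.
Proof.
  intros hd hm.
  assert (K : forall y1 y2 t, lo < y1 < hi -> lo < y2 < hi -> y1 < y2 -> 0 < t < 1 ->
     f (t * y1 + (1 - t) * y2) < t * f y1 + (1 - t) * f y2).
  { intros y1 y2 t h1 h2 h12 ht.
    set (z := t * y1 + (1 - t) * y2).
    assert (hz1 : y1 < z). { unfold z. nra. }
    assert (hz2 : z < y2). { unfold z. nra. }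
    destruct (MVT_cor2 f f' y1 z hz1) as [c1 [E1 H1]].
    { intros c hc. apply is_derive_Reals, hd. lra. }
    destruct (MVT_cor2 f f' z y2 hz2) as [c2 [E2 H2]].
    { intros c hc. apply is_derive_Reals, hd. lra. }
    assert (hc : f' c1 < f' c2) by (apply hm; lra).
    assert (ez1 : z - y1 = (1 - t) * (y2 - y1)) by (unfold z; ring).
    assert (ez2 : y2 - z = t * (y2 - y1)) by (unfold z; ring).
    rewrite ez1 in E1. rewrite ez2 in E2.
    assert (t * (f z - f y1) < (1 - t) * (f y2 - f z)).
    { rewrite E1, E2. 
      assert (0 < t * (1 - t) * (y2 - y1)) by (apply Rmult_lt_0_compat; [nra|lra]).
      nra. }
    lra. }
  intros y1 y2 t h1 h2 hne ht.
  destruct (Rlt_or_le y1 y2) as [h|h].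
  - apply K; auto.
  - assert (y2 < y1) by lra.
    replace (t * y1 + (1 - t) * y2) with ((1 - t) * y2 + (1 - (1 - t)) * y1) by ring.
    replace (t * f y1 + (1 - t) * f y2) with ((1 - t) * f y2 + (1 - (1 - t)) * f y1) by ring.
    apply K; auto; lra.
Qed.

Lemma Lc_strict_convex b y1 y2 t : inI b y1 -> inI b y2 -> y1 <> y2 -> 0 < t < 1 ->
  Lc b (t * y1 + (1 - t) * y2) < t * Lc b y1 + (1 - t) * Lc b y2.
Proof.
  intros h1 h2. apply (strict_convex_gen (Lc b) (Lp b) (- (b/2)) (b/2)); auto.
  - intros; apply Lc_deriv; auto.
  - intros; apply Lp_incr; unfold inI; lra.
Qed.

Lemma Lc_convex b y1 y2 t : inI b y1 -> inI b y2 -> 0 <= t <= 1 ->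
  Lc b (t * y1 + (1 - t) * y2) <= t * Lc b y1 + (1 - t) * Lc b y2.
Proof.
  intros h1 h2 ht.
  destruct (Req_dec y1 y2) as [e|ne].
  { subst. replace (t * y2 + (1 - t) * y2) with y2 by ring. lra. }
  destruct (Req_dec t 0) as [e|n0].
  { subst. replace (0 * y1 + (1 - 0) * y2) with y2 by ring. lra. }
  destruct (Req_dec t 1) as [e|n1].
  { subst. replace (1 * y1 + (1 - 1) * y2) with y1 by ring. lra. }
  left. apply Lc_strict_convex; auto; lra.
Qed.

Lemma Lc_incr_pos b y1 y2 : 0 <= y1 -> y1 < y2 -> y2 < b / 2 -> Lc b y1 < Lc b y2.
Proof.
  intros h1 h12 h2.
  destruct (MVT_cor2 (Lc b) (Lp b) y1 y2 h12) as [c [E H]].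
  { intros c hc. apply is_derive_Reals, Lc_deriv. unfold inI; lra. }
  assert (0 < Lp b c). { rewrite <- (Lp_0 b). apply Lp_incr; unfold inI; lra. }
  nra.
Qed.

Lemma Lc_nonneg b y : inI b y -> 0 <= Lc b y.
Proof.
  intros [h1 h2]. rewrite <- (Lc_0 b).
  destruct (Rtotal_order y 0) as [h|[h|h]].
  - rewrite <- (Lc_even b y). left. apply Lc_incr_pos; lra.
  - subst; lra.
  - left. apply Lc_incr_pos; lra.
Qed.

Lemma Lc_abs_le b y x : Rabs y <= x -> x < b / 2 -> Lc b y <= Lc b x.
Proof.
  intros h hx. destruct (Rle_lt_dec 0 y) as [hy|hy].
  - rewrite Rabs_pos_eq in h by lra. destruct (Req_dec y x). subst; lra. left; apply Lc_incr_pos; lra.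
  - rewrite Rabs_left in h by lra. rewrite <- (Lc_even b y). destruct (Req_dec (-y) x). rewrite H; lra. left; apply Lc_incr_pos; lra.
Qed.

Lemma Lc_large b M : 0 < b -> exists y, 0 < y < b / 2 /\ M < Lc b y.
Proof.
  intros hb. assert (hu := uu_pos b). assert (hu1 := uu_lt1 b hb).
  set (K := Rmax (Rmax 1 (M - 2 * ln (1 - uu b) + 1)) (- ln ((1 - uu b) / 2))).
  set (e := exp (- K)).
  assert (he0 : 0 < e) by apply exp_pos.
  assert (heK : ln e = - K) by apply ln_exp.
  assert (he1 : e <= (1 - uu b) / 2).
  { unfold e. rewrite <- (exp_ln ((1 - uu b) / 2)) by lra.
    destruct (Req_dec (-K) (ln ((1 - uu b)/2))) as [E|E]. rewrite E; lra.
    left. apply exp_increasing. assert (- ln ((1 - uu b) / 2) <= K) by (unfold K; apply Rmax_r).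
    lra. }
  set (y := b / 2 + ln (1 - e)).
  assert (hl : ln (1 - e) < 0). { rewrite <- ln_1. apply ln_increasing; lra. }
  assert (hy0 : 0 < y).
  { unfold y. assert (ln (uu b) = - (b/2)) by (unfold uu; apply ln_exp).
    assert (ln (uu b) < ln (1 - e)) by (apply ln_increasing; lra). lra. }
  exists y. split. split; auto. unfold y; lra.
  assert (E1 : uu b * exp y = 1 - e).
  { unfold y, uu. rewrite <- exp_plus. replace (- (b / 2) + (b / 2 + ln (1 - e))) with (ln (1 - e)) by ring.
    apply exp_ln; lra. }
  unfold Lc. rewrite E1. replace (1 - (1 - e)) with e by ring. rewrite heK.
  assert (0 < uu b * exp (- y) < 1).
  { split. apply Rmult_lt_0_compat; auto; apply exp_pos.
    apply uexp_lt1; lra. }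
  assert (ln (1 - uu b * exp (- y)) < 0). { rewrite <- ln_1. apply ln_increasing; lra. }
  assert (M - 2 * ln (1 - uu b) + 1 <= K) by (unfold K; eapply Rle_trans; [apply Rmax_r| apply Rmax_l]).
  lra.
Qed.

Lemma exRInt_cont (f : R -> R) a c :
  (forall z, Rmin a c <= z <= Rmax a c -> continuous f z) -> ex_RInt f a c.
Proof. intros. apply (@ex_RInt_continuous R_CompleteNormedModule). auto. Qed.

Lemma RInt_scal_R (f : R -> R) a c t : ex_RInt f a c ->
  RInt (fun x => t * f x) a c = t * RInt f a c.
Proof. intros h. exact (RInt_scal f a c t h). Qed.
Lemma RInt_plus_R (f g : R -> R) a c : ex_RInt f a c -> ex_RInt g a c ->
  RInt (fun x => f x + g x) a c = RInt f a c + RInt g a c.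
Proof. intros h1 h2. exact (RInt_plus f g a c h1 h2). Qed.
Lemma ex_RInt_scal_R (f : R -> R) a c t : ex_RInt f a c -> ex_RInt (fun x => t * f x) a c.
Proof. intros h. exact (ex_RInt_scal f a c t h). Qed.
Lemma ex_RInt_plus_R (f g : R -> R) a c : ex_RInt f a c -> ex_RInt g a c ->
  ex_RInt (fun x => f x + g x) a c.
Proof. intros h1 h2. exact (ex_RInt_plus f g a c h1 h2). Qed.

Lemma cont_plus_R (f g : R -> R) x : continuous f x -> continuous g x -> continuous (fun y => f y + g y) x.
Proof. intros. exact (@continuous_plus R_UniformSpace R_AbsRing R_NormedModule f g x H H0). Qed.
Lemma cont_mult_R (f g : R -> R) x : continuous f x -> continuous g x -> continuous (fun y => f y * g y) x.
Proof. intros. exact (@continuous_mult R_UniformSpace R_AbsRing f g x H H0). Qed.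
Lemma cont_const_R (c : R) x : continuous (fun _ : R => c) x.
Proof. apply (@continuous_const R_UniformSpace R_UniformSpace). Qed.
Lemma cont_scal_R (f : R -> R) t x : continuous f x -> continuous (fun y => t * f y) x.
Proof. intros. apply cont_mult_R; auto. apply cont_const_R. Qed.

Definition AI (b p q : R) := RInt (fun x => Lc b (p * x + q)) 0 1.
Definition Ad (b p q : R) := inI b q /\ inI b (p + q).

Lemma comb_in lo hi a c x : lo < a < hi -> lo < c < hi -> 0 <= x <= 1 ->
  lo < (1 - x) * a + x * c < hi.
Proof.
  intros ha hc hx.
  assert (E1 : (1 - x) * a + x * c - lo = (1 - x) * (a - lo) + x * (c - lo)) by ring.
  assert (E2 : hi - ((1 - x) * a + x * c) = (1 - x) * (hi - a) + x * (hi - c)) by ring.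
  destruct (Req_dec x 0) as [e|n]; [subst; lra|].
  assert (0 < x * (c - lo)) by (apply Rmult_lt_0_compat; lra).
  assert (0 < x * (hi - c)) by (apply Rmult_lt_0_compat; lra).
  assert (0 <= (1 - x) * (a - lo)) by (apply Rmult_le_pos; lra).
  assert (0 <= (1 - x) * (hi - a)) by (apply Rmult_le_pos; lra).
  lra.
Qed.

Lemma Ad_pt b p q x : Ad b p q -> 0 <= x <= 1 -> inI b (p * x + q).
Proof.
  intros [h1 h2] hx. unfold inI in *.
  replace (p * x + q) with ((1 - x) * q + x * (p + q)) by ring.
  apply comb_in; auto.
Qed.

Lemma Lc_aff_cont b p q x : Ad b p q -> 0 <= x <= 1 -> continuous (fun x => Lc b (p * x + q)) x.
Proof.
  intros h hx. apply exd_cont.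
  apply (ex_derive_comp (Lc b) (fun x => p * x + q)).
  - eexists; apply Lc_deriv, Ad_pt; auto.
  - auto_derive; auto.
Qed.

Lemma AI_ex b p q : Ad b p q -> ex_RInt (fun x => Lc b (p * x + q)) 0 1.
Proof.
  intros h. apply exRInt_cont. intros z hz.
  rewrite Rmin_left, Rmax_right in hz by lra. apply Lc_aff_cont; auto.
Qed.

Lemma AI_ex_sub b p q a c : Ad b p q -> 0 <= a -> a <= c -> c <= 1 ->
  ex_RInt (fun x => Lc b (p * x + q)) a c.
Proof.
  intros h ha hac hc. apply exRInt_cont. intros z hz.
  rewrite Rmin_left, Rmax_right in hz by lra. apply Lc_aff_cont; auto; lra.
Qed.

Lemma AI_nonneg b p q : Ad b p q -> 0 <= AI b p q.
Proof.
  intros h. unfold AI. apply RInt_ge_0. lra. apply AI_ex; auto.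
  intros x hx. apply Lc_nonneg, Ad_pt; auto; lra.
Qed.

Lemma Ad_comb b p1 q1 p2 q2 t : Ad b p1 q1 -> Ad b p2 q2 -> 0 <= t <= 1 ->
  Ad b (t * p1 + (1 - t) * p2) (t * q1 + (1 - t) * q2).
Proof.
  intros [a1 a2] [c1 c2] ht. unfold Ad, inI in *.
  replace (t * p1 + (1 - t) * p2 + (t * q1 + (1 - t) * q2)) with ((1 - (1 - t)) * (p1 + q1) + (1 - t) * (p2 + q2)) by ring.
  replace (t * q1 + (1 - t) * q2) with ((1 - (1 - t)) * q1 + (1 - t) * q2) by ring.
  split; apply comb_in; auto; lra.
Qed.

Lemma RInt_lin3 (f g : R -> R) t a c : ex_RInt f a c -> ex_RInt g a c ->
  RInt (fun x => t * f x + (1 - t) * g x) a c = t * RInt f a c + (1 - t) * RInt g a c.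
Proof.
  intros hf hg.
  rewrite (RInt_plus_R (fun x => t * f x) (fun x => (1 - t) * g x)).
  - rewrite (RInt_scal_R f a c t hf), (RInt_scal_R g a c (1 - t) hg). reflexivity.
  - apply (ex_RInt_scal_R f a c t hf).
  - apply (ex_RInt_scal_R g a c (1 - t) hg).
Qed.

Lemma AI_convex b p1 q1 p2 q2 t : Ad b p1 q1 -> Ad b p2 q2 -> 0 <= t <= 1 ->
  AI b (t * p1 + (1 - t) * p2) (t * q1 + (1 - t) * q2) <= t * AI b p1 q1 + (1 - t) * AI b p2 q2.
Proof.
  intros h1 h2 ht. unfold AI.
  rewrite <- RInt_lin3 by (apply AI_ex; auto).
  apply RInt_le. lra.
  apply AI_ex, Ad_comb; auto.
  apply (ex_RInt_plus_R (fun x => t * Lc b (p1 * x + q1)) (fun x => (1 - t) * Lc b (p2 * x + q2))).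
  apply (ex_RInt_scal_R _ _ _ t), AI_ex; auto. apply (ex_RInt_scal_R _ _ _ (1 - t)), AI_ex; auto.
  intros x hx.
  replace ((t * p1 + (1 - t) * p2) * x + (t * q1 + (1 - t) * q2)) with (t * (p1 * x + q1) + (1 - t) * (p2 * x + q2)) by ring.
  apply Lc_convex; try apply Ad_pt; auto; lra.
Qed.

Lemma RInt_chasles_R (f : R -> R) a m c : ex_RInt f a m -> ex_RInt f m c ->
  RInt f a c = RInt f a m + RInt f m c.
Proof. intros h1 h2. symmetry. apply (RInt_Chasles f a m c h1 h2). Qed.

Lemma AI_strict b p1 q1 p2 q2 t : Ad b p1 q1 -> Ad b p2 q2 -> 0 < t < 1 -> p1 <> p2 ->
  AI b (t * p1 + (1 - t) * p2) (t * q1 + (1 - t) * q2) < t * AI b p1 q1 + (1 - t) * AI b p2 q2.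
Proof.
  intros h1 h2 ht hp.
  set (F := fun x => Lc b ((t * p1 + (1 - t) * p2) * x + (t * q1 + (1 - t) * q2))).
  set (Gf := fun x => t * Lc b (p1 * x + q1) + (1 - t) * Lc b (p2 * x + q2)).
  assert (h3 : Ad b (t * p1 + (1 - t) * p2) (t * q1 + (1 - t) * q2)) by (apply Ad_comb; auto; lra).
  assert (exF : forall a c, 0 <= a -> a <= c -> c <= 1 -> ex_RInt F a c).
  { intros; apply AI_ex_sub; auto. }
  assert (exG : forall a c, 0 <= a -> a <= c -> c <= 1 -> ex_RInt Gf a c).
  { intros. apply (ex_RInt_plus_R (fun x => t * Lc b (p1 * x + q1)) (fun x => (1 - t) * Lc b (p2 * x + q2))).
    apply (ex_RInt_scal_R _ _ _ t), AI_ex_sub; auto. apply (ex_RInt_scal_R _ _ _ (1 - t)), AI_ex_sub; auto. }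
  assert (le : forall x, 0 <= x <= 1 -> F x <= Gf x).
  { intros x hx. unfold F, Gf.
    replace ((t * p1 + (1 - t) * p2) * x + (t * q1 + (1 - t) * q2)) with (t * (p1 * x + q1) + (1 - t) * (p2 * x + q2)) by ring.
    apply Lc_convex; try apply Ad_pt; auto; lra. }
  assert (lt : forall x, 0 <= x <= 1 -> p1 * x + q1 <> p2 * x + q2 -> F x < Gf x).
  { intros x hx hne. unfold F, Gf.
    replace ((t * p1 + (1 - t) * p2) * x + (t * q1 + (1 - t) * q2)) with (t * (p1 * x + q1) + (1 - t) * (p2 * x + q2)) by ring.
    apply Lc_strict_convex; try apply Ad_pt; auto. }
  assert (cF : forall x, 0 <= x <= 1 -> continuous F x).
  { intros; apply Lc_aff_cont; auto. }
  assert (cG : forall x, 0 <= x <= 1 -> continuous Gf x).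
  { intros x hx. unfold Gf.
    apply (cont_plus_R (fun x => t * Lc b (p1 * x + q1)) (fun x => (1 - t) * Lc b (p2 * x + q2))).
    apply (cont_scal_R (fun x => Lc b (p1 * x + q1))), Lc_aff_cont; auto.
    apply (cont_scal_R (fun x => Lc b (p2 * x + q2))), Lc_aff_cont; auto. }
  unfold AI. rewrite <- RInt_lin3 by (apply AI_ex; auto). fold Gf. fold F.
  rewrite (RInt_chasles_R F 0 (1/2) 1) by (apply exF; lra).
  rewrite (RInt_chasles_R Gf 0 (1/2) 1) by (apply exG; lra).
  set (x0 := (q2 - q1) / (p1 - p2)).
  assert (hx0 : forall x, x <> x0 -> p1 * x + q1 <> p2 * x + q2).
  { intros x hx e. apply hx. unfold x0. field_simplify_eq; [|lra]. 
    assert (p1 - p2 <> 0) by lra. lra. }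
  destruct (Rle_lt_dec x0 (1/2)) as [c|c].
  - assert (RInt F 0 (1/2) <= RInt Gf 0 (1/2)).
    { apply RInt_le. lra. apply exF; lra. apply exG; lra. intros; apply le; lra. }
    assert (RInt F (1/2) 1 < RInt Gf (1/2) 1).
    { apply RInt_lt. lra. intros; apply cG; lra. intros; apply cF; lra.
      intros x hx. apply lt. lra. apply hx0. lra. }
    lra.
  - assert (RInt F (1/2) 1 <= RInt Gf (1/2) 1).
    { apply RInt_le. lra. apply exF; lra. apply exG; lra. intros; apply le; lra. }
    assert (RInt F 0 (1/2) < RInt Gf 0 (1/2)).
    { apply RInt_lt. lra. intros; apply cG; lra. intros; apply cF; lra.
      intros x hx. apply lt. lra. apply hx0. lra. }
    lra.
Qed.

Lemma inI_margin b y : inI b y -> 0 < Rmin (y + b / 2) (b / 2 - y).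
Proof. intros [h1 h2]. apply Rmin_glb_lt; lra. Qed.

Lemma inI_of_close b y z : inI b y -> Rabs (z - y) < Rmin (y + b / 2) (b / 2 - y) -> inI b z.
Proof.
  intros h hz. assert (m1 := Rmin_l (y + b/2) (b/2 - y)). assert (m2 := Rmin_r (y + b/2) (b/2 - y)).
  apply Rabs_def2 in hz. unfold inI in *. lra.
Qed.

Lemma locally_inI_aff b k r s0 : inI b (k * s0 + r) -> locally s0 (fun s => inI b (k * s + r)).
Proof.
  intros h. assert (hm := inI_margin b _ h).
  set (M := Rmin (k * s0 + r + b / 2) (b / 2 - (k * s0 + r))) in *.
  assert (he : 0 < M / (Rabs k + 1)).
  { apply Rdiv_lt_0_compat; auto. generalize (Rabs_pos k); lra. }
  exists (mkposreal _ he). intros s hs. simpl in hs.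
  unfold ball in hs; simpl in hs; unfold AbsRing_ball, abs, minus, plus, opp in hs; simpl in hs.
  apply (inI_of_close b (k * s0 + r)); auto. fold M.
  replace (k * s + r - (k * s0 + r)) with (k * (s + - s0)) by ring.
  rewrite Rabs_mult.
  assert (Rabs k * Rabs (s + - s0) <= Rabs k * (M / (Rabs k + 1))).
  { apply Rmult_le_compat_l. apply Rabs_pos. lra. }
  assert (Rabs k * (M / (Rabs k + 1)) < M).
  { apply (Rmult_lt_reg_r (Rabs k + 1)). generalize (Rabs_pos k); lra.
    field_simplify. generalize (Rabs_pos k); nra. generalize (Rabs_pos k); lra. }
  lra.
Qed.

Lemma locally_Ad b kap rho s0 : Ad b s0 (kap * s0 + rho) ->
  locally s0 (fun s => Ad b s (kap * s + rho)).
Proof.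
  intros [h1 h2]. unfold Ad.
  apply filter_and.
  - apply locally_inI_aff; auto.
  - apply (filter_imp (fun s => inI b ((1 + kap) * s + rho))).
    + intros s hs. replace (s + (kap * s + rho)) with ((1 + kap) * s + rho) by ring. auto.
    + apply locally_inI_aff. replace ((1 + kap) * s0 + rho) with (s0 + (kap * s0 + rho)) by ring. auto.
Qed.

Lemma locally_2d_inI b (h : R -> R -> R) x y : continuity_2d_pt h x y -> inI b (h x y) ->
  locally_2d (fun u v => inI b (h u v)) x y.
Proof.
  intros hc hi. assert (hm := inI_margin b _ hi).
  destruct (hc (mkposreal _ hm)) as [d hd]. exists d. intros u v hu hv.
  apply (inI_of_close b (h x y)); auto.
Qed.

Lemma lin_deriv (t kap rho u0 : R) : is_derive (fun u => u * t + (kap * u + rho)) u0 (t + kap).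
Proof. auto_derive; auto. ring. Qed.

Lemma comp_deriv b t kap rho u0 : inI b (u0 * t + (kap * u0 + rho)) ->
  is_derive (fun u => Lc b (u * t + (kap * u + rho))) u0 ((t + kap) * Lp b (u0 * t + (kap * u0 + rho))).
Proof.
  intros h.
  apply (is_derive_comp (Lc b) (fun u => u * t + (kap * u + rho))).
  - apply Lc_deriv; auto.
  - apply lin_deriv.
Qed.

Definition Wf (b kap rho s : R) := AI b s (kap * s + rho).
Definition Wd (b kap rho s : R) := RInt (fun x => (x + kap) * Lp b (s * x + (kap * s + rho))) 0 1.

Lemma aff_2d kap rho x y : continuity_2d_pt (fun u v => u * v + (kap * u + rho)) x y.
Proof.
  apply continuity_2d_pt_plus.
  apply continuity_2d_pt_mult. apply continuity_2d_pt_id1. apply continuity_2d_pt_id2.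
  apply continuity_2d_pt_plus.
  apply continuity_2d_pt_mult. apply continuity_2d_pt_const. apply continuity_2d_pt_id1.
  apply continuity_2d_pt_const.
Qed.

Lemma Wf_deriv b kap rho s0 : Ad b s0 (kap * s0 + rho) -> is_derive (Wf b kap rho) s0 (Wd b kap rho s0).
Proof.
  intros h. unfold Wf, AI, Wd.
  assert (E : RInt (fun x => (x + kap) * Lp b (s0 * x + (kap * s0 + rho))) 0 1 =
              RInt (fun t => Derive (fun u => Lc b (u * t + (kap * u + rho))) s0) 0 1).
  { apply RInt_ext. intros x hx. rewrite Rmin_left, Rmax_right in hx by lra.
    symmetry. apply is_derive_unique. apply comp_deriv. apply Ad_pt; auto; lra. }
  rewrite E.
  apply (is_derive_RInt_param (fun u t => Lc b (u * t + (kap * u + rho))) 0 1 s0).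
  - apply (filter_imp (fun s => Ad b s (kap * s + rho))).
    + intros s hs t ht. rewrite Rmin_left, Rmax_right in ht by lra.
      eexists. apply comp_deriv. apply Ad_pt; auto.
    + apply locally_Ad; auto.
  - intros t ht. rewrite Rmin_left, Rmax_right in ht by lra.
    apply continuity_2d_pt_ext_loc with (f := fun u v => (v + kap) * Lp b (u * v + (kap * u + rho))).
    + apply locally_2d_impl with (P := fun u v => inI b (u * v + (kap * u + rho))).
      * apply locally_2d_forall. intros u v hi. symmetry. apply is_derive_unique. apply comp_deriv; auto.
      * apply locally_2d_inI. apply aff_2d. apply Ad_pt; auto.
    + apply continuity_2d_pt_mult.
      * apply continuity_2d_pt_plus. apply continuity_2d_pt_id2. apply continuity_2d_pt_const.
      * apply (continuity_1d_2d_pt_comp (Lp b) (fun u v => u * v + (kap * u + rho))).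
        -- apply continuity_pt_filterlim. apply Lp_cont. apply Ad_pt; auto.
        -- apply aff_2d.
  - apply (filter_imp (fun s => Ad b s (kap * s + rho))).
    + intros s hs. apply AI_ex; auto.
    + apply locally_Ad; auto.
Qed.

Lemma Lp_aff_cont b p q x : Ad b p q -> 0 <= x <= 1 -> continuous (fun x => Lp b (p * x + q)) x.
Proof.
  intros h hx. apply exd_cont.
  apply (ex_derive_comp (Lp b) (fun x => p * x + q)).
  - apply Lp_deriv, Ad_pt; auto.
  - auto_derive; auto.
Qed.

Lemma Wf_ident b kap rho s : Ad b s (kap * s + rho) ->
  Wf b kap rho s + s * Wd b kap rho s =
  (1 + kap) * Lc b (s + (kap * s + rho)) - kap * Lc b (kap * s + rho).
Proof.
  intros h. unfold Wf, AI, Wd.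
  set (q := kap * s + rho) in *.
  set (F := fun x => (x + kap) * Lc b (s * x + q)).
  set (dF := fun x => Lc b (s * x + q) + s * ((x + kap) * Lp b (s * x + q))).
  assert (hd : forall x, Rmin 0 1 <= x <= Rmax 0 1 -> is_derive F x (dF x)).
  { intros x hx. rewrite Rmin_left, Rmax_right in hx by lra. unfold F, dF.
    assert (hi : inI b (s * x + q)) by (apply Ad_pt; auto).
    assert (hL : is_derive (fun x => Lc b (s * x + q)) x (s * Lp b (s * x + q))).
    { apply (is_derive_comp (Lc b) (fun x => s * x + q)). apply Lc_deriv; auto.
      auto_derive; auto; ring. }
    assert (D1 : is_derive (fun x => x + kap) x 1) by (auto_derive; auto).
    assert (H1 := is_derive_mult (fun x => x + kap) (fun x => Lc b (s * x + q)) x 1 _ D1 hL Rmult_comm).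
    replace (Lc b (s * x + q) + s * ((x + kap) * Lp b (s * x + q))) with
      (plus (mult 1 (Lc b (s * x + q))) (mult (x + kap) (s * Lp b (s * x + q)))).
    exact H1. unfold plus, mult; simpl. ring. }
  assert (hc : forall x, Rmin 0 1 <= x <= Rmax 0 1 -> continuous dF x).
  { intros x hx. rewrite Rmin_left, Rmax_right in hx by lra. unfold dF.
    apply cont_plus_R. apply Lc_aff_cont; auto.
    apply cont_scal_R. apply cont_mult_R.
    apply (cont_plus_R (fun x => x)). apply continuous_id. apply cont_const_R.
    apply Lp_aff_cont; auto. }
  assert (HI := is_RInt_derive F dF 0 1 hd hc).
  apply is_RInt_unique in HI.
  assert (e1 : ex_RInt (fun x => Lc b (s * x + q)) 0 1) by (apply AI_ex; auto).
  assert (e2 : ex_RInt (fun x => (x + kap) * Lp b (s * x + q)) 0 1).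
  { apply exRInt_cont. intros z hz. rewrite Rmin_left, Rmax_right in hz by lra.
    apply cont_mult_R. apply (cont_plus_R (fun x => x)). apply continuous_id. apply cont_const_R.
    apply Lp_aff_cont; auto. }
  rewrite <- RInt_scal_R by auto.
  rewrite <- RInt_plus_R by (auto; apply ex_RInt_scal_R; auto).
  fold dF. rewrite HI. unfold F. simpl. unfold minus, plus, opp; simpl.
  replace (s * 1 + q) with (s + q) by ring. replace (s * 0 + q) with q by ring. ring.
Qed.

Definition convex_on (f : R -> R) lo hi := forall y1 y2 t, lo < y1 < hi -> lo < y2 < hi -> 0 <= t <= 1 ->
  f (t * y1 + (1 - t) * y2) <= t * f y1 + (1 - t) * f y2.
Definition sconvex_on (f : R -> R) lo hi := forall y1 y2 t, lo < y1 < hi -> lo < y2 < hi -> y1 <> y2 -> 0 < t < 1 ->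
  f (t * y1 + (1 - t) * y2) < t * f y1 + (1 - t) * f y2.

Lemma tangent (f : R -> R) lo hi x0 d y : convex_on f lo hi -> lo < x0 < hi -> lo < y < hi ->
  is_derive f x0 d -> f x0 + d * (y - x0) <= f y.
Proof.
  intros hc hx hy hd. apply is_derive_Reals in hd.
  destruct (Req_dec y x0) as [e|ne]. { subst. lra. }
  destruct (Rle_lt_dec (f x0 + d * (y - x0)) (f y)) as [ok|bad]; auto.
  exfalso.
  set (gap := f x0 + d * (y - x0) - f y).
  assert (hgap : 0 < gap) by (unfold gap; lra).
  assert (hay : 0 < Rabs (y - x0)) by (apply Rabs_pos_lt; lra).
  set (eps := gap / (2 * Rabs (y - x0))).
  assert (heps : 0 < eps) by (unfold eps; apply Rdiv_lt_0_compat; lra).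
  destruct (hd eps heps) as [del hdel].
  set (t := Rmin (1/2) (del / (2 * Rabs (y - x0)))).
  assert (ht0 : 0 < t). { unfold t. apply Rmin_glb_lt. lra. apply Rdiv_lt_0_compat. apply cond_pos. lra. }
  assert (ht1 : t <= 1/2) by apply Rmin_l.
  assert (htd : t * Rabs (y - x0) < del).
  { assert (t <= del / (2 * Rabs (y - x0))) by apply Rmin_r.
    assert (t * Rabs (y - x0) <= del / (2 * Rabs (y - x0)) * Rabs (y - x0)) by (apply Rmult_le_compat_r; lra).
    replace (del / (2 * Rabs (y - x0)) * Rabs (y - x0)) with (del / 2) in H0 by (field; lra).
    generalize (cond_pos del). lra. }
  set (h := t * (y - x0)).
  assert (hh0 : h <> 0). { unfold h. intro e. apply Rmult_integral in e. lra. }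
  assert (hh1 : Rabs h < del). { unfold h. rewrite Rabs_mult, Rabs_pos_eq by lra. auto. }
  specialize (hdel h hh0 hh1).
  assert (conv : f (x0 + h) <= t * f y + (1 - t) * f x0).
  { replace (x0 + h) with (t * y + (1 - t) * x0) by (unfold h; ring). apply hc; auto; lra. }
  set (Q := (f (x0 + h) - f x0) / h) in *.
  assert (EQ : f (x0 + h) - f x0 = Q * h) by (unfold Q; field; auto).
  assert (A : Q * h <= t * (f y - f x0)) by lra.
  unfold h in A. 
  assert (B : Q * (y - x0) <= f y - f x0).
  { apply (Rmult_le_reg_l t); auto. lra. }
  apply Rabs_def2 in hdel.
  assert (C : (Q - d) * (y - x0) >= - (eps * Rabs (y - x0))).
  { destruct (Rle_lt_dec 0 (y - x0)).
    - rewrite Rabs_pos_eq by lra. nra.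
    - rewrite Rabs_left by lra. nra. }
  assert (E : eps * Rabs (y - x0) = gap / 2) by (unfold eps; field; lra).
  unfold gap in E. lra.
Qed.

Lemma deriv_mono (f : R -> R) lo hi x1 x2 d1 d2 : convex_on f lo hi -> lo < x1 < hi -> lo < x2 < hi ->
  x1 < x2 -> is_derive f x1 d1 -> is_derive f x2 d2 -> d1 <= d2.
Proof.
  intros hc h1 h2 h12 hd1 hd2.
  assert (A := tangent f lo hi x1 d1 x2 hc h1 h2 hd1).
  assert (B := tangent f lo hi x2 d2 x1 hc h2 h1 hd2).
  assert (d1 * (x2 - x1) <= d2 * (x2 - x1)) by lra.
  apply Rmult_le_reg_r in H; lra.
Qed.

Lemma deriv_smono (f : R -> R) lo hi x1 x2 d1 d2 : convex_on f lo hi -> sconvex_on f lo hi -> lo < x1 < hi -> lo < x2 < hi ->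
  x1 < x2 -> is_derive f x1 d1 -> is_derive f x2 d2 -> d1 < d2.
Proof.
  intros hc hs h1 h2 h12 hd1 hd2.
  assert (le := deriv_mono f lo hi x1 x2 d1 d2 hc h1 h2 h12 hd1 hd2).
  destruct (Rle_lt_or_eq_dec _ _ le) as [lt|eq]; auto. subst d2. exfalso.
  set (m := (1/2) * x1 + (1 - 1/2) * x2).
  assert (hm : lo < m < hi) by (unfold m; lra).
  assert (A := tangent f lo hi x1 d1 m hc h1 hm hd1).
  assert (B := tangent f lo hi x2 d1 x1 hc h2 h1 hd2).
  assert (C := hs x1 x2 (1/2) h1 h2 ltac:(lra) ltac:(lra)). fold m in C.
  replace (d1 * (m - x1)) with ((d1 * (x2 - x1)) / 2) in A by (unfold m; field).
  replace (d1 * (x1 - x2)) with (- (d1 * (x2 - x1))) in B by ring.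
  lra.
Qed.

Lemma deriv_unique_sconv (f : R -> R) lo hi x1 x2 d : convex_on f lo hi -> sconvex_on f lo hi -> lo < x1 < hi -> lo < x2 < hi ->
  is_derive f x1 d -> is_derive f x2 d -> x1 = x2.
Proof.
  intros hc hs h1 h2 hd1 hd2.
  destruct (Rtotal_order x1 x2) as [l|[e|g]]; auto.
  - assert (W := deriv_smono f lo hi x1 x2 d d hc hs h1 h2 l hd1 hd2). lra.
  - assert (W := deriv_smono f lo hi x2 x1 d d hc hs h2 h1 g hd2 hd1). lra.
Qed.

Lemma min_deriv0 (f : R -> R) lo hi x d : lo < x < hi -> (forall y, lo < y < hi -> f x <= f y) ->
  is_derive f x d -> d = 0.
Proof.
  intros hx hm hd. apply is_derive_Reals in hd.
  set (pr := exist (fun l => derivable_pt_abs f x l) d hd : derivable_pt f x).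
  assert (E := deriv_minimum f lo hi x pr (proj1 hx) (proj2 hx) (fun y a b => hm y (conj a b))).
  exact E.
Qed.

Lemma darboux (f : R -> R) a c q : a < c -> (forall x, a <= x <= c -> ex_derive f x) ->
  Derive f a < q -> q < Derive f c -> exists x, a < x < c /\ is_derive f x q.
Proof.
  intros hac hd ha hc.
  set (g := fun x => f x - q * x).
  assert (hg : forall x, a <= x <= c -> is_derive g x (Derive f x - q)).
  { intros x hx. unfold g. 
    apply (is_derive_minus f (fun x => q * x) x (Derive f x) q).
    apply Derive_correct, hd; auto.
    auto_derive; auto; ring. }
  destruct (continuity_ab_min g a c) as [mx [hmin hmx]]. lra.
  { intros x hx. apply continuity_pt_filterlim. apply (@ex_derive_continuous R_AbsRing R_NormedModule).
    eexists; apply hg; auto. }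
  assert (na : mx <> a).
  { intro e. subst mx.
    assert (H := hg a ltac:(lra)). apply is_derive_Reals in H.
    destruct (H ((q - Derive f a)/2) ltac:(lra)) as [del hdel].
    set (hh := Rmin (del / 2) ((c - a)/2)).
    assert (hh0 : 0 < hh) by (unfold hh; apply Rmin_glb_lt; [apply Rdiv_lt_0_compat; [apply cond_pos|lra]|lra]).
    assert (hh1 : hh < del). { assert (hh <= del/2) by apply Rmin_l. generalize (cond_pos del); lra. }
    assert (hh2 : hh <= (c - a)/2) by apply Rmin_r.
    specialize (hdel hh ltac:(lra) ltac:(rewrite Rabs_pos_eq; lra)).
    apply Rabs_def2 in hdel.
    assert (hq : (g (a + hh) - g a) / hh < 0) by lra.
    assert (g (a + hh) - g a < 0).
    { replace (g (a + hh) - g a) with ((g (a + hh) - g a) / hh * hh) by (field; lra). nra. }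
    assert (g a <= g (a + hh)) by (apply hmin; lra). lra. }
  assert (nc : mx <> c).
  { intro e. subst mx.
    assert (H := hg c ltac:(lra)). apply is_derive_Reals in H.
    destruct (H ((Derive f c - q)/2) ltac:(lra)) as [del hdel].
    set (hh := Rmin (del / 2) ((c - a)/2)).
    assert (hh0 : 0 < hh) by (unfold hh; apply Rmin_glb_lt; [apply Rdiv_lt_0_compat; [apply cond_pos|lra]|lra]).
    assert (hh1 : hh < del). { assert (hh <= del/2) by apply Rmin_l. generalize (cond_pos del); lra. }
    assert (hh2 : hh <= (c - a)/2) by apply Rmin_r.
    specialize (hdel (- hh) ltac:(lra) ltac:(rewrite Rabs_Ropp, Rabs_pos_eq; lra)).
    apply Rabs_def2 in hdel.
    assert (hq : (g (c + - hh) - g c) / (- hh) > 0) by lra.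
    assert (g (c + - hh) - g c < 0).
    { replace (g (c + - hh) - g c) with ((g (c + - hh) - g c) / (- hh) * (- hh)) by (field; lra). nra. }
    assert (g c <= g (c + - hh)) by (apply hmin; lra). lra. }
  exists mx. split. lra.
  assert (H := hg mx ltac:(lra)).
  assert (Z := min_deriv0 g a c mx _ ltac:(lra) (fun y hy => hmin y ltac:(lra)) H).
  replace q with (Derive f mx) by lra. apply Derive_correct, hd; lra.
Qed.

Lemma RInt_flip (f : R -> R) : ex_RInt f 0 1 -> RInt f 0 1 = RInt (fun x => f (1 - x)) 0 1.
Proof.
  intros h.
  assert (h' : ex_RInt f (-1 * 0 + 1) (-1 * 1 + 1)).
  { replace (-1 * 0 + 1) with 1 by field. replace (-1 * 1 + 1) with 0 by field.
    apply ex_RInt_swap; auto. }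
  assert (E := RInt_comp_lin f (-1) 1 0 1 h').
  assert (X := ex_RInt_comp_lin f (-1) 1 0 1 h').
  replace (-1 * 0 + 1) with 1 in E by field. replace (-1 * 1 + 1) with 0 in E by field.
  rewrite <- (opp_RInt_swap f 0 1 h) in E.
  assert (X2 : ex_RInt (fun y => f (1 - y)) 0 1).
  { apply (ex_RInt_ext (fun y => (-1) * (scal (-1) (f (-1*y+1))))).
    intros x _. unfold scal; simpl; unfold mult; simpl. replace (-1 * x + 1) with (1 - x) by field. ring.
    apply ex_RInt_scal_R. exact X. }
  rewrite (RInt_ext (fun y => scal (-1) (f (-1*y+1))) (fun y => -1 * f (1 - y))) in E.
  2: { intros x _. unfold scal; simpl; unfold mult; simpl. replace (-1 * x + 1) with (1 - x) by field. ring. }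
  rewrite RInt_scal_R in E by exact X2.
  unfold opp in E; simpl in E. lra.
Qed.

Lemma AI_sym b p q : Ad b p q -> AI b p q = AI b p (- p - q).
Proof.
  intros h. unfold AI. rewrite RInt_flip by (apply AI_ex; auto).
  apply RInt_ext. intros x _. rewrite <- Lc_even. f_equal. field.
Qed.

Lemma Ad_sym b p q : Ad b p q -> Ad b p (- p - q).
Proof.
  intros [h1 h2]. split. replace (- p - q) with (- (p + q)) by field. apply inI_neg; auto.
  replace (p + (- p - q)) with (- q) by field. apply inI_neg; auto.
Qed.

Lemma AI_center b p q : Ad b p q -> AI b p (- p / 2) <= AI b p q.
Proof.
  intros h. assert (h2 := Ad_sym b p q h).
  assert (C := AI_convex b p q p (- p - q) (1/2) h h2 ltac:(lra)).
  replace (1 / 2 * p + (1 - 1 / 2) * p) with p in C by field.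
  replace (1 / 2 * q + (1 - 1 / 2) * (- p - q)) with (- p / 2) in C by field.
  rewrite <- (AI_sym b p q h) in C. lra.
Qed.

Section GH.
Variable b d : R.
Hypothesis hb : 0 < b.
Hypothesis hd : 0 < d < b.
Let m := d - b / 2.

Definition Gdom h := - b < h < b.
Definition Hdom s := - d < s < b - d.

Lemma Gdom_Ad h : Gdom h -> Ad b h (-1/2 * h + 0).
Proof. unfold Gdom, Ad, inI. intros. lra. Qed.
Lemma Hdom_Ad s : Hdom s -> Ad b s (0 * s + m).
Proof. unfold Hdom, Ad, inI, m. intros. lra. Qed.

Lemma G_W h : Gdom h -> G b h = Wf b (-1/2) 0 h.
Proof.
  intros hh. unfold G, Wf, AI. apply RInt_ext. intros x hx. rewrite Rmin_left, Rmax_right in hx by lra.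
  rewrite L_eq; auto. f_equal. field.
  replace (h * (x - 1/2)) with (h * x + (-1/2 * h + 0)) by field. apply Ad_pt. apply Gdom_Ad; auto. lra.
Qed.

Lemma H_W s : Hdom s -> H b d s = Wf b 0 m s.
Proof.
  intros hs. unfold H, Wf, AI. apply RInt_ext. intros x hx. rewrite Rmin_left, Rmax_right in hx by lra.
  rewrite L_eq; auto. f_equal. unfold m; field.
  replace (s * x + d - b / 2) with (s * x + (0 * s + m)) by (unfold m; field). apply Ad_pt. apply Hdom_Ad; auto. lra.
Qed.

Lemma G_deriv h : Gdom h -> is_derive (G b) h (Wd b (-1/2) 0 h).
Proof.
  intros hh. apply (is_derive_ext_loc (Wf b (-1/2) 0)).
  - apply (filter_imp (fun s => Ad b s (-1/2 * s + 0))).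
    + intros s hs. symmetry. apply G_W. destruct hs as [[h1 h2] [h3 h4]]. unfold Gdom. lra.
    + apply locally_Ad. apply Gdom_Ad; auto.
  - apply Wf_deriv. apply Gdom_Ad; auto.
Qed.

Lemma H_deriv s : Hdom s -> is_derive (H b d) s (Wd b 0 m s).
Proof.
  intros hs. apply (is_derive_ext_loc (Wf b 0 m)).
  - apply (filter_imp (fun s => Ad b s (0 * s + m))).
    + intros s' hs'. symmetry. apply H_W. destruct hs' as [[h1 h2] [h3 h4]]. unfold Hdom. unfold m in *. lra.
    + apply locally_Ad. apply Hdom_Ad; auto.
  - apply Wf_deriv. apply Hdom_Ad; auto.
Qed.

Lemma G_ex h : Gdom h -> ex_derive (G b) h.
Proof. intros; eexists; apply G_deriv; auto. Qed.
Lemma H_ex s : Hdom s -> ex_derive (H b d) s.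
Proof. intros; eexists; apply H_deriv; auto. Qed.

Lemma G_ident h dd : Gdom h -> is_derive (G b) h dd -> G b h + h * dd = Lc b (h / 2).
Proof.
  intros hh hdd. rewrite <- (is_derive_unique _ _ _ hdd).
  rewrite (is_derive_unique _ _ _ (G_deriv h hh)).
  rewrite G_W by auto. rewrite Wf_ident by (apply Gdom_Ad; auto).
  replace (h + (-1/2 * h + 0)) with (h / 2) by field.
  replace (-1/2 * h + 0) with (- (h / 2)) by field. rewrite Lc_even. field.
Qed.

Lemma H_ident s dd : Hdom s -> is_derive (H b d) s dd -> H b d s + s * dd = Lc b (s + m).
Proof.
  intros hs hdd.
  rewrite <- (is_derive_unique _ _ _ hdd).
  rewrite (is_derive_unique _ _ _ (H_deriv s hs)).
  rewrite H_W by auto. rewrite Wf_ident by (apply Hdom_Ad; auto).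
  replace (s + (0 * s + m)) with (s + m) by field. ring.
Qed.

Lemma G_convex : convex_on (G b) (- b) b.
Proof.
  intros y1 y2 t h1 h2 ht. 
  assert (h3 : Gdom (t * y1 + (1 - t) * y2)).
  { unfold Gdom. replace (t * y1 + (1 - t) * y2) with ((1 - (1 - t)) * y1 + (1 - t) * y2) by field.
    apply comb_in; auto; lra. }
  rewrite !G_W by auto. unfold Wf.
  replace (-1/2 * (t * y1 + (1 - t) * y2) + 0) with (t * (-1/2 * y1 + 0) + (1 - t) * (-1/2 * y2 + 0)) by field.
  apply AI_convex; auto; apply Gdom_Ad; auto.
Qed.

Lemma G_sconvex : sconvex_on (G b) (- b) b.
Proof.
  intros y1 y2 t h1 h2 hne ht. 
  assert (h3 : Gdom (t * y1 + (1 - t) * y2)).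
  { unfold Gdom. replace (t * y1 + (1 - t) * y2) with ((1 - (1 - t)) * y1 + (1 - t) * y2) by field.
    apply comb_in; auto; lra. }
  rewrite !G_W by auto. unfold Wf.
  replace (-1/2 * (t * y1 + (1 - t) * y2) + 0) with (t * (-1/2 * y1 + 0) + (1 - t) * (-1/2 * y2 + 0)) by field.
  apply AI_strict; auto; apply Gdom_Ad; auto.
Qed.

Lemma H_convex : convex_on (H b d) (- d) (b - d).
Proof.
  intros y1 y2 t h1 h2 ht. 
  assert (h3 : Hdom (t * y1 + (1 - t) * y2)).
  { unfold Hdom. replace (t * y1 + (1 - t) * y2) with ((1 - (1 - t)) * y1 + (1 - t) * y2) by field.
    apply comb_in; auto; lra. }
  rewrite !H_W by auto. unfold Wf.
  replace (0 * (t * y1 + (1 - t) * y2) + m) with (t * (0 * y1 + m) + (1 - t) * (0 * y2 + m)) by field.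
  apply AI_convex; auto; apply Hdom_Ad; auto.
Qed.

Lemma H_sconvex : sconvex_on (H b d) (- d) (b - d).
Proof.
  intros y1 y2 t h1 h2 hne ht. 
  assert (h3 : Hdom (t * y1 + (1 - t) * y2)).
  { unfold Hdom. replace (t * y1 + (1 - t) * y2) with ((1 - (1 - t)) * y1 + (1 - t) * y2) by field.
    apply comb_in; auto; lra. }
  rewrite !H_W by auto. unfold Wf.
  replace (0 * (t * y1 + (1 - t) * y2) + m) with (t * (0 * y1 + m) + (1 - t) * (0 * y2 + m)) by field.
  apply AI_strict; auto; apply Hdom_Ad; auto.
Qed.

Lemma G_nonneg h : Gdom h -> 0 <= G b h.
Proof. intros; rewrite G_W by auto; apply AI_nonneg, Gdom_Ad; auto. Qed.
Lemma H_nonneg s : Hdom s -> 0 <= H b d s.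
Proof. intros; rewrite H_W by auto; apply AI_nonneg, Hdom_Ad; auto. Qed.

Lemma G_0 : G b 0 = 0.
Proof.
  rewrite G_W by (unfold Gdom; lra). unfold Wf, AI.
  rewrite (RInt_ext _ (fun _ => 0)). rewrite RInt_const. unfold scal; simpl; unfold mult; simpl; ring.
  intros x _. replace (0 * x + (-1/2 * 0 + 0)) with 0 by field. apply Lc_0.
Qed.

Lemma H_0 : H b d 0 = Lc b m.
Proof.
  rewrite H_W by (unfold Hdom; lra). unfold Wf, AI.
  rewrite (RInt_ext _ (fun _ => Lc b m)). rewrite RInt_const. unfold scal; simpl; unfold mult; simpl; ring.
  intros x _. f_equal. field.
Qed.

Lemma HG s : Hdom s -> G b s <= H b d s.
Proof.
  intros hs. rewrite H_W by auto. rewrite G_W by (unfold Gdom, Hdom in *; lra).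
  unfold Wf. replace (-1/2 * s + 0) with (- s / 2) by field.
  apply AI_center. apply Hdom_Ad; auto.
Qed.

Lemma G_even h : Gdom h -> G b (- h) = G b h.
Proof.
  intros hh. rewrite !G_W by (unfold Gdom in *; lra). unfold Wf.
  rewrite (AI_sym b h) by (apply Gdom_Ad; auto). unfold AI. apply RInt_ext. intros x _.
  rewrite <- Lc_even. f_equal. field.
Qed.

Lemma HG_junction : G b (b - 2 * d) = H b d (b - 2 * d).
Proof.
  unfold G, H. apply RInt_ext. intros x _. f_equal. field.
Qed.

Lemma G_deriv0 : Derive (G b) 0 = 0.
Proof.
  apply (min_deriv0 (G b) (- b) b 0). lra.
  intros y hy. rewrite G_0. apply G_nonneg. unfold Gdom; lra.
  apply Derive_correct, G_ex. unfold Gdom; lra.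
Qed.

End GH.

Section F.
Variable b d : R.
Hypothesis hb : 0 < b.
Hypothesis hd : 0 < d < b.
Let m := d - b / 2.

Lemma G_tangent h1 h2 dd : Gdom b h1 -> Gdom b h2 -> is_derive (G b) h1 dd -> G b h1 + dd * (h2 - h1) <= G b h2.
Proof. intros; apply (tangent (G b) (- b) b); auto; apply G_convex; auto. Qed.

Lemma H_tangent s1 s2 dd : Hdom b d s1 -> Hdom b d s2 -> is_derive (H b d) s1 dd -> H b d s1 + dd * (s2 - s1) <= H b d s2.
Proof. intros i1 i2 i3; apply (tangent (H b d) (- d) (b - d)); auto; apply H_convex; auto. Qed.

Lemma G_mono h1 h2 d1 d2 : Gdom b h1 -> Gdom b h2 -> h1 < h2 -> is_derive (G b) h1 d1 -> is_derive (G b) h2 d2 -> d1 < d2.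
Proof. intros. apply (deriv_smono (G b) (- b) b h1 h2); auto. apply G_convex; auto. apply G_sconvex; auto. Qed.

Lemma H_mono s1 s2 d1 d2 : Hdom b d s1 -> Hdom b d s2 -> s1 < s2 -> is_derive (H b d) s1 d1 -> is_derive (H b d) s2 d2 -> d1 < d2.
Proof. intros i1 i2 i3 i4 i5. apply (deriv_smono (H b d) (- d) (b - d) s1 s2); auto. apply H_convex; auto. apply H_sconvex; auto. Qed.

Lemma G_exists q : 0 < q -> exists h, 0 < h < b /\ is_derive (G b) h q.
Proof.
  intros hq.
  destruct (Lc_large b (2 * b * q) hb) as [y [hy hL]].
  set (h1 := 2 * y).
  assert (g1 : Gdom b h1) by (unfold Gdom, h1; lra).
  assert (D1 := Derive_correct _ _ (G_ex b hb h1 g1)).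
  assert (I1 := G_ident b hb h1 _ g1 D1).
  assert (T1 := G_tangent h1 0 _ g1 ltac:(unfold Gdom; lra) D1).
  rewrite (G_0 b hb) in T1. replace (h1 / 2) with y in I1 by (unfold h1; field).
  assert (hq1 : q < Derive (G b) h1).
  { replace (Derive (G b) h1 * (0 - h1)) with (- (h1 * Derive (G b) h1)) in T1 by ring.
    assert (an1 : 2 * (h1 * Derive (G b) h1) > 2 * b * q) by lra.
    assert (an2 : h1 < b) by (unfold h1; lra).
    assert (an3 : 0 < h1) by (unfold h1; lra).
    destruct (Rle_lt_dec (Derive (G b) h1) q) as [c|c]; auto.
    assert (an4 : 0 <= q) by lra.
    assert (an5 : 2 * h1 * Derive (G b) h1 <= 2 * h1 * q) by (apply Rmult_le_compat_l; lra).
    assert (an6 : 2 * h1 * q <= 2 * b * q) by (apply Rmult_le_compat_r; lra). lra. }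
  destruct (darboux (G b) 0 h1 q) as [h [hh hD]].
  - unfold h1; lra.
  - intros x hx. apply G_ex; auto. unfold Gdom, h1 in *; lra.
  - rewrite (G_deriv0 b hb). auto.
  - auto.
  - exists h. split; auto. unfold h1 in *; lra.
Qed.

Lemma H_m0_deriv : m = 0 -> is_derive (H b d) 0 0.
Proof.
  intros hm.
  assert (hd0 : Hdom b d 0) by (unfold Hdom; lra).
  assert (D := Derive_correct _ _ (H_ex b d hb hd 0 hd0)).
  replace 0 with (Derive (H b d) 0) at 2; auto.
  apply (min_deriv0 (H b d) (- d) (b - d) 0). lra.
  intros y hy. rewrite (H_0 b d hb hd). fold m. rewrite hm, Lc_0. apply H_nonneg; auto.
  auto.
Qed.

Lemma H_low : exists s, Hdom b d s /\ is_derive (H b d) s (Derive (H b d) s) /\ Derive (H b d) s <= 0.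
Proof.
  destruct (Rtotal_order m 0) as [hm|[hm|hm]].
  - exists (- m). assert (hs : Hdom b d (- m)) by (unfold Hdom, m in *; lra).
    assert (D := Derive_correct _ _ (H_ex b d hb hd _ hs)).
    split; auto. split; auto.
    assert (I := H_ident b d hb hd _ _ hs D). fold m in I. replace (- m + m) with 0 in I by ring.
    rewrite Lc_0 in I. assert (an7 : 0 <= H b d (- m)) by (apply H_nonneg; auto).
    assert (an8 : - m * Derive (H b d) (- m) <= 0) by lra.
    destruct (Rle_lt_dec (Derive (H b d) (- m)) 0) as [c|c]; auto.
    assert (an9 : 0 < - m * Derive (H b d) (- m)) by (apply Rmult_lt_0_compat; lra). lra.
  - exists 0. assert (hs : Hdom b d 0) by (unfold Hdom; lra).
    assert (D := H_m0_deriv hm). rewrite (is_derive_unique _ _ _ D). split; auto. split; auto. lra.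
  - exists (- 2 * m). assert (hs : Hdom b d (- 2 * m)) by (unfold Hdom, m in *; lra).
    assert (D := Derive_correct _ _ (H_ex b d hb hd _ hs)).
    split; auto. split; auto.
    assert (I := H_ident b d hb hd _ _ hs D). fold m in I. replace (- 2 * m + m) with (- m) in I by ring.
    rewrite Lc_even in I.
    assert (B : H b d (- 2 * m) <= Lc b m).
    { rewrite H_W by auto. unfold Wf, AI. fold m.
      assert (RC : RInt (fun _ => Lc b m) 0 1 = Lc b m).
      { rewrite RInt_const. unfold scal; simpl; unfold mult; simpl; ring. }
      apply Rle_trans with (RInt (fun _ => Lc b m) 0 1); [|rewrite RC; lra].
      apply RInt_le. lra. apply AI_ex. apply Hdom_Ad; auto.
      apply exRInt_cont. intros; apply cont_const_R.
      intros x hx. apply Lc_abs_le. 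
      replace (- 2 * m * x + (0 * (- 2 * m) + m)) with (m * (1 - 2 * x)) by ring.
      rewrite Rabs_mult, Rabs_pos_eq by lra. 
      assert (an10 : Rabs (1 - 2 * x) <= 1) by (apply Rabs_le; lra). 
      assert (an11 : m * Rabs (1 - 2 * x) <= m * 1) by (apply Rmult_le_compat_l; lra). lra.
      unfold m; lra. }
    assert (an12 : - 2 * m * Derive (H b d) (- 2 * m) >= 0) by lra.
    destruct (Rle_lt_dec (Derive (H b d) (- 2 * m)) 0) as [c|c]; auto.
    assert (an13 : 0 < 2 * m * Derive (H b d) (- 2 * m)) by (apply Rmult_lt_0_compat; lra). lra.
Qed.

Lemma H_exists q : 0 < q -> exists s, Hdom b d s /\ is_derive (H b d) s q.
Proof.
  intros hq.
  destruct H_low as [s0 [hs0 [D0 N0]]].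
  destruct (Lc_large b (Lc b m + 2 * b * q) hb) as [y [hy hL]].
  assert (hLm : 0 <= Lc b m) by (apply Lc_nonneg; unfold inI, m; lra).
  assert (hym : m < y).
  { destruct (Rlt_le_dec m y) as [c|c]; auto.
    assert (an14 : Lc b y <= Lc b m) by (apply Lc_abs_le; [rewrite Rabs_pos_eq; lra | unfold m; lra]).
    assert (an15 : 0 <= b * q) by (apply Rmult_le_pos; lra). lra. }
  set (s1 := y - m).
  assert (g1 : Hdom b d s1) by (unfold Hdom, s1, m in *; lra).
  assert (D1 := Derive_correct _ _ (H_ex b d hb hd s1 g1)).
  assert (I1 := H_ident b d hb hd s1 _ g1 D1). fold m in I1. replace (s1 + m) with y in I1 by (unfold s1; ring).
  assert (T1 := H_tangent s1 0 _ g1 ltac:(unfold Hdom; lra) D1).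
  rewrite (H_0 b d hb hd) in T1. fold m in T1.
  assert (hs1 : 0 < s1 < b) by (unfold s1, m in *; lra).
  assert (hq1 : q < Derive (H b d) s1).
  { replace (Derive (H b d) s1 * (0 - s1)) with (- (s1 * Derive (H b d) s1)) in T1 by ring.
    assert (an16 : 2 * (s1 * Derive (H b d) s1) > 2 * b * q) by lra.
    destruct (Rle_lt_dec (Derive (H b d) s1) q) as [c|c]; auto.
    assert (an17 : 2 * s1 * Derive (H b d) s1 <= 2 * s1 * q) by (apply Rmult_le_compat_l; lra).
    assert (an18 : 2 * s1 * q <= 2 * b * q) by (apply Rmult_le_compat_r; lra). lra. }
  assert (hlt : s0 < s1).
  { destruct (Rlt_le_dec s0 s1) as [c|c]; auto. exfalso.
    destruct (Req_dec s0 s1) as [e|ne]. subst. lra.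
    assert (W := H_mono s1 s0 _ _ g1 hs0 ltac:(lra) D1 D0). lra. }
  destruct (darboux (H b d) s0 s1 q hlt) as [s [hs hD]].
  - intros x hx. apply H_ex; auto. unfold Hdom in *; lra.
  - lra.
  - auto.
  - exists s. split; auto. unfold Hdom in *; lra.
Qed.

Lemma junction : 0 <= b - 2 * d -> Derive (G b) (b - 2 * d) = Derive (H b d) (b - 2 * d).
Proof.
  intros hj. destruct (Req_dec (b - 2 * d) 0) as [e|ne].
  - rewrite e. rewrite (G_deriv0 b hb). assert (hm : m = 0) by (unfold m; lra).
    rewrite (is_derive_unique _ _ _ (H_m0_deriv hm)). auto.
  - set (j := b - 2 * d) in *.
    assert (gj : Gdom b j) by (unfold Gdom, j in *; lra).
    assert (hj' : Hdom b d j) by (unfold Hdom, j in *; lra).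
    assert (DG := Derive_correct _ _ (G_ex b hb j gj)).
    assert (DH := Derive_correct _ _ (H_ex b d hb hd j hj')).
    assert (IG := G_ident b hb j _ gj DG). assert (IH := H_ident b d hb hd j _ hj' DH).
    fold m in IH. replace (j + m) with (j / 2) in IH by (unfold j, m; field).
    assert (HJ : G b j = H b d j) by (unfold j; apply HG_junction).
    rewrite <- HJ in IH.
    assert (an19 : j * (Derive (G b) j - Derive (H b d) j) = 0) by lra.
    apply Rmult_integral in an19. destruct an19; lra.
Qed.

End F.

Lemma the_unique_spec (P : R -> Prop) : (exists x, P x) -> P (the_unique P).
Proof. intros h. unfold the_unique. apply epsilon_spec. auto. Qed.

Definition gam (u : R) := (u * u + u * u * u) / (1 - u).

Lemma Gamma_gam b : Gamma b = gam (uu b).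
Proof.
  unfold Gamma, gam, uu.
  replace (exp (- b)) with (exp (- (b/2)) * exp (- (b/2))) by (rewrite <- exp_plus; f_equal; field).
  replace (exp (- (3 * b / 2))) with (exp (- (b/2)) * exp (- (b/2)) * exp (- (b/2))) by (rewrite <- !exp_plus; f_equal; field).
  reflexivity.
Qed.

Lemma gam_incr u1 u2 : 0 < u1 -> u1 < u2 -> u2 < 1 -> gam u1 < gam u2.
Proof.
  intros h1 h12 h2. unfold gam.
  apply (Rmult_lt_reg_r ((1 - u1) * (1 - u2))). apply Rmult_lt_0_compat; lra.
  field_simplify; try lra.
  assert (0 < u2 - u1) by lra.
  assert (0 < u1 * u2) by (apply Rmult_lt_0_compat; lra).
  set (K := (u2 + u1) * (1 - u1 * u2) + u1 * u1 + u2 * u2).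
  assert (hK : 0 < K). { unfold K. assert (u1 * u2 < 1) by nra. assert (0 < (u2 + u1) * (1 - u1 * u2)) by (apply Rmult_lt_0_compat; lra). nra. }
  assert (E : - u1 * u2 ^ 3 - u1 * u2 ^ 2 + u2 ^ 3 + u2 ^ 2 - (- u1 ^ 3 * u2 + u1 ^ 3 - u1 ^ 2 * u2 + u1 ^ 2) = (u2 - u1) * K) by (unfold K; ring).
  assert (0 < (u2 - u1) * K) by (apply Rmult_lt_0_compat; lra). lra.
Qed.

Lemma cubic_root : exists u, 1/2 < u < 3/5 /\ u * u * u + u * u + u - 1 = 0.
Proof.
  destruct (IVT (fun u => u * u * u + u * u + u - 1) (1/2) (3/5)) as [z [hz e]].
  - intros x. apply derivable_continuous_pt. reg.
  - lra.
  - lra.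
  - lra.
  - exists z. split; auto. destruct hz. split.
    + destruct (Req_dec z (1/2)). subst. lra. lra.
    + destruct (Req_dec z (3/5)). subst. lra. lra.
Qed.

Lemma beta_c_spec : 0 < beta_c /\ Gamma beta_c = 1.
Proof.
  unfold beta_c. apply (the_unique_spec (fun b => 0 < b /\ Gamma b = 1)).
  destruct cubic_root as [u [hu e]].
  exists (- 2 * ln u). split.
  - assert (ln u < 0) by (rewrite <- ln_1; apply ln_increasing; lra). lra.
  - rewrite Gamma_gam. unfold uu. replace (- (- 2 * ln u / 2)) with (ln u) by field.
    rewrite exp_ln by lra. unfold gam. field_simplify_eq; lra.
Qed.

Lemma Gamma_lt1 b : b > beta_c -> 0 < Gamma b < 1.
Proof.
  intros h. destruct beta_c_spec as [h0 h1].
  rewrite Gamma_gam in *.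
  assert (hb : 0 < b) by lra.
  assert (uu b < uu beta_c) by (unfold uu; apply exp_increasing; lra).
  split.
  - unfold gam. assert (hu := uu_pos b). assert (hu1 := uu_lt1 b hb).
    apply Rdiv_lt_0_compat. nra. lra.
  - rewrite <- h1. apply gam_incr; auto. apply uu_pos. apply uu_lt1; lra.
Qed.

Lemma x_beta_spec b : b > beta_c -> 0 < x_beta b < b / 2 /\ Lc b (x_beta b) = - ln (Gamma b).
Proof.
  intros h. assert (hb : 0 < b) by (destruct beta_c_spec; lra).
  assert (hG := Gamma_lt1 b h).
  set (l := - ln (Gamma b)).
  assert (hl : 0 < l). { unfold l. assert (ln (Gamma b) < 0) by (rewrite <- ln_1; apply ln_increasing; lra). lra. }
  assert (EX : exists x, 0 < x < b / 2 /\ L b x = l).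
  { destruct (Lc_large b l hb) as [y [hy hL]].
    destruct (IVT_interv (fun x => Lc b x - l) 0 y) as [z [hz e]].
    - intros a ha. apply continuity_pt_minus. apply continuity_pt_filterlim. apply Lc_cont. unfold inI; lra.
      apply continuity_pt_const. intros u v; auto.
    - lra.
    - rewrite Lc_0. lra.
    - lra.
    - exists z. assert (z <> 0). { intro. subst. rewrite Lc_0 in e. lra. }
      split. lra. rewrite L_eq; auto. lra. unfold inI; lra. }
  apply the_unique_spec in EX. unfold x_beta. unfold l in EX. destruct EX as [h1 h2].
  split; auto. rewrite <- L_eq; auto. unfold inI; lra.
Qed.

Lemma cont_eps (f : R -> R) x : continuous f x -> forall eps, 0 < eps ->
  exists del, 0 < del /\ forall y, Rabs (y - x) < del -> Rabs (f y - f x) < eps.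
Proof.
  intros hc eps he. apply continuity_pt_filterlim in hc.
  destruct (hc eps he) as [alp [ha hb]]. exists alp. split; auto.
  intros y hy. destruct (Req_dec y x) as [e|ne].
  - subst. rewrite Rminus_diag, Rabs_R0. auto.
  - apply (hb y). split. split. exact I. auto. simpl. unfold R_dist. auto.
Qed.

Section DB.
Variable b : R.
Hypothesis hbc : b > beta_c.
Let hb : 0 < b.
Proof. destruct beta_c_spec; lra. Qed.
Let x := x_beta b.
Let hx : 0 < x < b / 2 /\ Lc b x = - ln (Gamma b).
Proof. apply x_beta_spec; auto. Qed.

Definition sf (d : R) := b / 2 - d - x.

Lemma sf_dom d : 0 < d < b -> Hdom b d (sf d).
Proof. intros. unfold Hdom, sf. destruct hx. lra. Qed.

Lemma Dval d : 0 < d < b -> sf d <> 0 ->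
  Derive (H b d) (sf d) = (Lc b x - AI b (sf d) x) / sf d.
Proof.
  intros hd hs. assert (hdom := sf_dom d hd).
  assert (D := Derive_correct _ _ (H_ex b d hb hd _ hdom)).
  assert (I := H_ident b d hb hd _ _ hdom D).
  replace (sf d + (d - b / 2)) with (- x) in I by (unfold sf; field).
  rewrite Lc_even in I.
  rewrite (H_W b d hb hd _ hdom) in I. unfold Wf in I.
  rewrite AI_sym in I by (apply Hdom_Ad; auto).
  replace (- sf d - (0 * sf d + (d - b / 2))) with x in I by (unfold sf; field).
  field_simplify_eq; auto. lra.
Qed.

Definition Phi (d : R) := (Lc b x - Wf b 0 x (sf d)) / sf d.

Lemma Phi_eq d : 0 < d < b -> sf d <> 0 -> Derive (H b d) (sf d) = Phi d.
Proof.
  intros hd hs. rewrite Dval by auto. unfold Phi, Wf. f_equal. f_equal. unfold AI.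
  apply RInt_ext. intros; f_equal; ring.
Qed.

Lemma Phi_cont d : 0 < d < b -> sf d <> 0 -> continuous Phi d.
Proof.
  intros hd hs. apply exd_cont. unfold Phi.
  apply ex_derive_div; auto.
  - apply (ex_derive_minus (fun _ => Lc b x) (fun d => Wf b 0 x (sf d))).
    + apply ex_derive_const.
    + apply (ex_derive_comp (Wf b 0 x) sf).
      * eexists. apply Wf_deriv. unfold Ad, sf, inI. destruct hx. split; lra.
      * unfold sf. auto_derive; auto.
  - unfold sf. auto_derive; auto.
Qed.

Lemma deltabar_H d : 0 < d < b -> Rbar_le (Finite d) (deltabar b) -> Derive (H b d) (sf d) <= 0.
Proof.
  intros hd hdb. destruct (Rle_lt_dec (Derive (H b d) (sf d)) 0) as [ok|bad]; auto. exfalso.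
  destruct hx as [[hx0 hx1] hxl].
  destruct (Req_dec (sf d) 0) as [e|ne].
  -
    assert (hm : d - b / 2 = - x) by (unfold sf in e; lra).
    assert (hdx : Hdom b d x) by (unfold Hdom; lra).
    assert (Dx := Derive_correct _ _ (H_ex b d hb hd _ hdx)).
    assert (I := H_ident b d hb hd _ _ hdx Dx). rewrite hm in I. replace (x + - x) with 0 in I by ring.
    rewrite Lc_0 in I. assert (nn : 0 <= H b d x) by (apply H_nonneg; auto).
    assert (neg : Derive (H b d) x <= 0).
    { destruct (Rle_lt_dec (Derive (H b d) x) 0) as [c|c]; auto.
      assert (0 < x * Derive (H b d) x) by (apply Rmult_lt_0_compat; lra). lra. }
    assert (hd0 := sf_dom d hd). rewrite e in hd0.
    assert (D0 := Derive_correct _ _ (H_ex b d hb hd _ hd0)).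
    assert (W := H_mono b d hb hd 0 x _ _ hd0 hdx hx0 D0 Dx).
    rewrite e in bad. lra.
  - assert (hc := Phi_cont d hd ne).
    assert (hP : 0 < Phi d) by (rewrite <- Phi_eq; auto).
    destruct (cont_eps Phi d hc (Phi d) hP) as [del [hdel hdel']].
    set (eta := Rmin (Rmin (del / 2) (d / 2)) (Rabs (sf d) / 2)).
    assert (he0 : 0 < eta).
    { unfold eta. apply Rmin_glb_lt. apply Rmin_glb_lt; lra. assert (0 < Rabs (sf d)) by (apply Rabs_pos_lt; auto). lra. }
    assert (he1 : eta <= del / 2) by (unfold eta; eapply Rle_trans; [apply Rmin_l|apply Rmin_l]).
    assert (he2 : eta <= d / 2) by (unfold eta; eapply Rle_trans; [apply Rmin_l|apply Rmin_r]).
    assert (he3 : eta <= Rabs (sf d) / 2) by (unfold eta; apply Rmin_r).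
    set (d' := d - eta).
    assert (hd' : 0 < d' < b) by (unfold d'; lra).
    assert (ns : sf d' <> 0).
    { unfold d'. replace (sf (d - eta)) with (sf d + eta) by (unfold sf; ring).
      destruct (Rle_lt_dec 0 (sf d)). lra. rewrite Rabs_left in he3 by lra. lra. }
    assert (pos : 0 < Derive (H b d') (sf d')).
    { rewrite Phi_eq by auto. 
      assert (A : Rabs (d' - d) < del) by (unfold d'; rewrite Rabs_left by lra; lra).
      specialize (hdel' d' A). apply Rabs_def2 in hdel'. lra. }
    assert (inS : 0 < d' < b /\ Derive (H b d') (b / 2 - d' - x_beta b) > 0) by (split; auto).
    destruct (Glb_Rbar_correct (fun delta => 0 < delta < b /\
       Derive (H b delta) (b / 2 - delta - x_beta b) > 0)) as [lb _].
    specialize (lb d' inS).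
    unfold deltabar in hdb.
    assert (X := Rbar_le_trans _ _ _ hdb (Rbar_min_r _ _)).
    assert (Y := Rbar_le_trans _ _ _ X lb). simpl in Y. unfold d' in Y. lra.
Qed.

End DB.

Lemma part (g : R -> R) C lo hi : 0 <= C -> lo < hi ->
  (forall a c, lo <= a -> a < c -> c <= hi -> g a - g c <= C * (c - a) * (c - a)) -> g lo <= g hi.
Proof.
  intros hC hlh hs.
  destruct (Rle_lt_dec (g lo) (g hi)) as [ok|bad]; auto. exfalso.
  set (gap := g lo - g hi).
  assert (hg : 0 < gap) by (unfold gap; lra).
  destruct (INR_archimed gap (C * (hi - lo) * (hi - lo) + 1) hg) as [n hn].
  assert (hn0 : (0 < n)%nat).
  { destruct n. simpl in hn. assert (0 <= C * (hi - lo) * (hi - lo)) by (apply Rmult_le_pos; [apply Rmult_le_pos|]; lra). lra. lia. }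
  assert (hnR : 0 < INR n) by (apply lt_0_INR; auto).
  set (h := (hi - lo) / INR n).
  assert (hh : 0 < h) by (unfold h; apply Rdiv_lt_0_compat; lra).
  assert (K : forall k, (k <= n)%nat -> g lo - g (lo + INR k * h) <= INR k * (C * h * h)).
  { induction k; intros hk.
    - simpl. replace (lo + 0 * h) with lo by ring. lra.
    - assert (IH := IHk ltac:(lia)).
      assert (hkn : INR (S k) <= INR n) by (apply le_INR; auto).
      assert (step : g (lo + INR k * h) - g (lo + INR (S k) * h) <= C * h * h).
      { replace (C * h * h) with (C * ((lo + INR (S k) * h) - (lo + INR k * h)) * ((lo + INR (S k) * h) - (lo + INR k * h))) by (rewrite S_INR; ring).
        apply hs.
        - assert (0 <= INR k) by apply pos_INR. assert (0 <= INR k * h) by (apply Rmult_le_pos; lra). lra.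
        - rewrite S_INR. lra.
        - assert (INR (S k) * h <= INR n * h) by (apply Rmult_le_compat_r; lra).
          unfold h in H at 2. replace (INR n * ((hi - lo) / INR n)) with (hi - lo) in H by (field; lra). lra. }
      rewrite S_INR in *. lra. }
  specialize (K n (le_n n)).
  replace (lo + INR n * h) with hi in K by (unfold h; field; lra).
  fold gap in K.
  replace (INR n * (C * h * h)) with (C * (hi - lo) * (hi - lo) / INR n) in K by (unfold h; field; lra).
  assert (C * (hi - lo) * (hi - lo) / INR n < gap).
  { apply (Rmult_lt_reg_r (INR n)); auto. replace (C * (hi - lo) * (hi - lo) / INR n * INR n) with (C * (hi - lo) * (hi - lo)) by (field; lra). lra. }
  lra.
Qed.

Lemma part_rev (g : R -> R) C lo hi : 0 <= C -> lo < hi ->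
  (forall a c, lo <= a -> a < c -> c <= hi -> g c - g a <= C * (c - a) * (c - a)) -> g hi <= g lo.
Proof.
  intros hC hlh hs.
  assert (X := part (fun t => g (- t)) C (- hi) (- lo) hC ltac:(lra)).
  simpl in X. rewrite !Ropp_involutive in X. apply X.
  intros a c ha hac hc.
  replace (C * (c - a) * (c - a)) with (C * (- a - - c) * (- a - - c)) by ring.
  apply hs; lra.
Qed.

Lemma RInt_poly1 (a0 a1 : R) : RInt (fun X => a0 + a1 * X) 0 1 = a0 + a1 / 2.
Proof.
  assert (HI := is_RInt_derive (fun X => a0 * X + a1 * (X * X / 2)) (fun X => a0 + a1 * X) 0 1).
  apply is_RInt_unique. 
  replace (a0 + a1 / 2) with (minus (a0 * 1 + a1 * (1 * 1 / 2)) (a0 * 0 + a1 * (0 * 0 / 2))).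
  apply HI.
  - intros x _. auto_derive; auto. field.
  - intros x _. apply (cont_plus_R (fun _ => a0) (fun X => a1 * X)). apply cont_const_R.
    apply cont_scal_R. apply continuous_id.
  - unfold minus, plus, opp; simpl. field.
Qed.

Lemma AI_jensen b p q : Ad b p q -> Lc b (p / 2 + q) <= AI b p q.
Proof.
  intros h. set (c := p / 2 + q).
  assert (hc : inI b c).
  { unfold c. replace (p / 2 + q) with (p * (1/2) + q) by field. apply Ad_pt; auto; lra. }
  assert (cv : convex_on (Lc b) (- (b/2)) (b/2)).
  { intros y1 y2 t h1 h2 ht. apply Lc_convex; auto. }
  unfold AI.
  apply Rle_trans with (RInt (fun X => (Lc b c - Lp b c * c + Lp b c * q) + (Lp b c * p) * X) 0 1).
  - rewrite RInt_poly1. apply Req_le. unfold c. field.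
  - apply RInt_le. lra.
    + apply exRInt_cont. intros z _. apply (cont_plus_R (fun _ => _) (fun X => (Lp b c * p) * X)). apply cont_const_R.
      apply cont_scal_R. apply continuous_id.
    + apply AI_ex; auto.
    + intros X hX. assert (hy : inI b (p * X + q)) by (apply Ad_pt; auto; lra).
      assert (T := tangent (Lc b) (- (b/2)) (b/2) c (Lp b c) (p * X + q) cv hc hy (Lc_deriv b c hc)).
      lra.
Qed.

Lemma Wd_H0 b m : Wd b 0 m 0 = Lp b m / 2.
Proof.
  unfold Wd. rewrite (RInt_ext _ (fun X => 0 + Lp b m * X)).
  rewrite RInt_poly1. apply Rplus_0_l.
  intros X _. change ((X + 0) * Lp b (0 * X + (0 * 0 + m)) = 0 + Lp b m * X). replace (0 * X + (0 * 0 + m)) with m by ring. ring.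
Qed.

Lemma Lc_abs_lt b y x : Rabs y < x -> x < b / 2 -> Lc b y < Lc b x.
Proof.
  intros h hx. destruct (Rle_lt_dec 0 y) as [hy|hy].
  - rewrite Rabs_pos_eq in h by lra. apply Lc_incr_pos; lra.
  - rewrite Rabs_left in h by lra. rewrite <- (Lc_even b y). apply Lc_incr_pos; lra.
Qed.

Lemma Lc_ge b x y : 0 <= x -> x <= y -> y < b / 2 -> Lc b x <= Lc b y.
Proof.
  intros h0 h1 h2. destruct (Req_dec x y). subst; lra. left; apply Lc_incr_pos; lra.
Qed.

Section Main.
Variable b d : R.
Hypothesis hbc : b > beta_c.
Hypothesis hd : 0 < d < b.
Hypothesis hdb : Rbar_le (Finite d) (deltabar b).

Let hb : 0 < b.
Proof. destruct beta_c_spec; lra. Qed.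
Let x := x_beta b.
Let hx : 0 < x < b / 2 /\ Lc b x = - ln (Gamma b).
Proof. apply x_beta_spec; auto. Qed.
Let l := - ln (Gamma b).
Let m := d - b / 2.
Let j := b - 2 * d.

Definition ht q := htilde b q.
Definition sd q := s_delta b d q.

Lemma ht_spec q : 0 < q -> 0 < ht q < b /\ is_derive (G b) (ht q) q.
Proof.
  intros hq.
  assert (P : 0 <= ht q < b /\ is_derive (G b) (ht q) q).
  { unfold ht, htilde. apply (the_unique_spec (fun h => 0 <= h < b /\ is_derive (G b) h q)).
    destruct (G_exists b d hb hd q hq) as [h [hh hD]]. exists h. split; auto. lra. }
  destruct P as [[p1 p2] p3]. split; auto. split; auto.
  destruct (Req_dec (ht q) 0) as [e|ne]; [|lra].
  rewrite e in p3. apply is_derive_unique in p3. rewrite (G_deriv0 b hb) in p3. lra.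
Qed.

Lemma sd_spec q : 0 < q -> Hdom b d (sd q) /\ is_derive (H b d) (sd q) q.
Proof.
  intros hq. unfold sd, s_delta. 
  apply (the_unique_spec (fun s => - d < s < b - d /\ is_derive (H b d) s q)).
  destruct (H_exists b d hb hd q hq) as [s [hs hD]]. exists s. split; auto.
Qed.

Definition regG q := d <= delta0 b q.

Lemma regG_iff q : regG q <-> ht q <= j.
Proof. unfold regG, delta0, j. fold (ht q). split; intros; lra. Qed.

Definition kk q := if Rle_dec d (delta0 b q) then ht q else sd q.
Definition VV q := if Rle_dec d (delta0 b q) then G b (ht q) else H b d (sd q).
Definition ee q := if Rle_dec d (delta0 b q) then ht q / 2 else sd q + m.

Lemma psi_E q : psi b q d = VV q - q * kk q.
Proof. unfold psi, VV, kk. fold (ht q) (sd q). destruct (Rle_dec d (delta0 b q)); auto. Qed.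

Lemma ee_I q : 0 < q -> VV q + q * kk q = Lc b (ee q).
Proof.
  intros hq. unfold VV, kk, ee. destruct (Rle_dec d (delta0 b q)).
  - destruct (ht_spec q hq) as [h1 h2]. rewrite Rmult_comm. apply G_ident; auto. unfold Gdom; lra.
  - destruct (sd_spec q hq) as [h1 h2]. rewrite Rmult_comm. apply H_ident; auto.
Qed.

Lemma kk_B q : 0 < q -> Rabs (kk q) <= b.
Proof.
  intros hq. unfold kk. destruct (Rle_dec d (delta0 b q)).
  - destruct (ht_spec q hq) as [h1 h2]. rewrite Rabs_pos_eq; lra.
  - destruct (sd_spec q hq) as [h1 h2]. unfold Hdom in h1. apply Rabs_le. lra.
Qed.

Lemma ee_in q : 0 < q -> inI b (ee q).
Proof.
  intros hq. unfold ee. destruct (Rle_dec d (delta0 b q)).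
  - destruct (ht_spec q hq) as [h1 h2]. unfold inI; lra.
  - destruct (sd_spec q hq) as [h1 h2]. unfold Hdom in h1. unfold inI, m; lra.
Qed.

Lemma G_tan h1 h2 dd : Gdom b h1 -> Gdom b h2 -> is_derive (G b) h1 dd -> G b h1 + dd * (h2 - h1) <= G b h2.
Proof. intros; apply (tangent (G b) (- b) b); auto; apply G_convex; auto. Qed.
Lemma H_tan s1 s2 dd : Hdom b d s1 -> Hdom b d s2 -> is_derive (H b d) s1 dd -> H b d s1 + dd * (s2 - s1) <= H b d s2.
Proof. intros i1 i2 i3; apply (tangent (H b d) (- d) (b - d)); auto; apply H_convex; auto. Qed.

Lemma psi_U p r : 0 < p -> 0 < r -> psi b p d <= VV r - p * kk r.
Proof.
  intros hp hr. rewrite psi_E. unfold VV, kk.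
  destruct (ht_spec p hp) as [hp1 hp2]. destruct (sd_spec p hp) as [sp1 sp2].
  destruct (ht_spec r hr) as [hr1 hr2]. destruct (sd_spec r hr) as [sr1 sr2].
  fold (ht p) (sd p) (ht r) (sd r).
  destruct (Rle_dec d (delta0 b p)) as [gp|hp']; destruct (Rle_dec d (delta0 b r)) as [gr|hr'].
  - assert (T := G_tan (ht p) (ht r) p ltac:(unfold Gdom; lra) ltac:(unfold Gdom; lra) hp2). lra.
  - unfold Hdom in sr1.
    assert (T := G_tan (ht p) (sd r) p ltac:(unfold Gdom; lra) ltac:(unfold Gdom; lra) hp2).
    assert (HG' := HG b d hb hd (sd r) sr1). lra.
  -
    assert (hjr : ht r <= j) by (apply regG_iff; exact gr).
    assert (hjp : j < ht p) by (destruct (Rle_lt_dec (ht p) j) as [c|c]; auto; exfalso; apply hp'; apply regG_iff; auto).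
    assert (hj0 : 0 < j) by lra.
    assert (hjd : Hdom b d j) by (unfold Hdom, j; lra).
    assert (T1 := H_tan (sd p) j p sp1 hjd sp2).
    assert (HJ : G b j = H b d j) by (unfold j; apply HG_junction).
    assert (gj : Gdom b j) by (unfold Gdom, j; lra).
    assert (Dj := Derive_correct _ _ (G_ex b hb j gj)).
    assert (T2 := G_tan j (ht r) _ gj ltac:(unfold Gdom; lra) Dj).
    assert (M := G_mono b hb j (ht p) _ _ gj ltac:(unfold Gdom; lra) hjp Dj hp2).
    assert (X : Derive (G b) j * (ht r - j) >= p * (ht r - j)).
    { assert (mn1 : 0 <= (p - Derive (G b) j) * (j - ht r)) by (apply Rmult_le_pos; lra). nra. }
    lra.
  - assert (T := H_tan (sd p) (sd r) p sp1 sr1 sp2). lra.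
Qed.

Definition gg t := Tq b d (t * t).

Lemma gg_eq t : 0 < t -> gg t = (- l + psi b (t * t) d) / t.
Proof.
  intros ht0. unfold gg, Tq, T. rewrite sqrt_square by lra.
  replace (1 / (1 / t) ^ 2) with (t * t) by (field; lra). unfold l. field. lra.
Qed.

Lemma step a c : 0 < a -> 0 < c ->
  gg a - gg c <= (Lc b (ee (c * c)) - l) * (1 / a - 1 / c) + b * (c - a) * (c - a) / a.
Proof.
  intros ha hc. assert (hc2 : 0 < c * c) by nra. assert (ha2 : 0 < a * a) by nra.
  rewrite !gg_eq by auto.
  assert (U := psi_U (a * a) (c * c) ha2 hc2).
  assert (E := psi_E (c * c)). assert (I := ee_I (c * c) hc2).
  assert (B := kk_B (c * c) hc2).
  set (k := kk (c * c)) in *. set (V := VV (c * c)) in *. set (L0 := Lc b (ee (c * c))) in *.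
  assert (A1 : (- l + psi b (a * a) d) / a <= (L0 - l - (c * c + a * a) * k) / a).
  { apply Rmult_le_compat_r. left; apply Rinv_0_lt_compat; auto. lra. }
  assert (A2 : (- l + psi b (c * c) d) / c = (L0 - l - 2 * (c * c) * k) / c).
  { rewrite E. f_equal. lra. }
  rewrite A2.
  assert (A3 : (L0 - l - (c * c + a * a) * k) / a - (L0 - l - 2 * (c * c) * k) / c =
     (L0 - l) * (1 / a - 1 / c) - k * ((c - a) * (c - a) / a)) by (field; lra).
  assert (A4 : - k * ((c - a) * (c - a) / a) <= b * (c - a) * (c - a) / a).
  { assert (sq : 0 <= (c - a) * (c - a)) by apply Rle_0_sqr.
    assert (mn2 : 0 <= (c - a) * (c - a) / a) by (apply Rdiv_le_0_compat; auto).
    assert (mn3 : - k <= b) by (generalize (Rabs_maj2 k); lra).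
    replace (b * (c - a) * (c - a) / a) with (b * ((c - a) * (c - a) / a)) by (field; lra).
    apply Rmult_le_compat_r; auto. }
  lra.
Qed.


Lemma G_le_of h1 h2 d1 d2 : Gdom b h1 -> Gdom b h2 -> is_derive (G b) h1 d1 -> is_derive (G b) h2 d2 -> d1 <= d2 -> h1 <= h2.
Proof.
  intros g1 g2 D1 D2 le. destruct (Rle_lt_dec h1 h2) as [c|c]; auto.
  assert (M := G_mono b hb h2 h1 _ _ g2 g1 c D2 D1). lra.
Qed.
Lemma G_lt_of h1 h2 d1 d2 : Gdom b h1 -> Gdom b h2 -> is_derive (G b) h1 d1 -> is_derive (G b) h2 d2 -> d1 < d2 -> h1 < h2.
Proof.
  intros g1 g2 D1 D2 lt. destruct (Rlt_le_dec h1 h2) as [c|c]; auto.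
  destruct (Req_dec h1 h2) as [e|ne].
  - subst. apply is_derive_unique in D1. apply is_derive_unique in D2. lra.
  - assert (M := G_mono b hb h2 h1 _ _ g2 g1 ltac:(lra) D2 D1). lra.
Qed.
Lemma H_le_of h1 h2 d1 d2 : Hdom b d h1 -> Hdom b d h2 -> is_derive (H b d) h1 d1 -> is_derive (H b d) h2 d2 -> d1 <= d2 -> h1 <= h2.
Proof.
  intros g1 g2 D1 D2 le. destruct (Rle_lt_dec h1 h2) as [c|c]; auto.
  assert (M := H_mono b d hb hd h2 h1 _ _ g2 g1 c D2 D1). lra.
Qed.
Lemma H_lt_of h1 h2 d1 d2 : Hdom b d h1 -> Hdom b d h2 -> is_derive (H b d) h1 d1 -> is_derive (H b d) h2 d2 -> d1 < d2 -> h1 < h2.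
Proof.
  intros g1 g2 D1 D2 lt. destruct (Rlt_le_dec h1 h2) as [c|c]; auto.
  destruct (Req_dec h1 h2) as [e|ne].
  - subst. apply is_derive_unique in D1. apply is_derive_unique in D2. lra.
  - assert (M := H_mono b d hb hd h2 h1 _ _ g2 g1 ltac:(lra) D2 D1). lra.
Qed.
Lemma G_le_mono h1 h2 d1 d2 : Gdom b h1 -> Gdom b h2 -> is_derive (G b) h1 d1 -> is_derive (G b) h2 d2 -> h1 <= h2 -> d1 <= d2.
Proof.
  intros g1 g2 D1 D2 le. destruct (Req_dec h1 h2) as [e|ne].
  - subst. apply is_derive_unique in D1. apply is_derive_unique in D2. lra.
  - left. apply (G_mono b hb h1 h2); auto. lra.
Qed.

Definition qbar := if Rle_dec (2 * x) j then Derive (G b) (2 * x) else Derive (H b d) (x - m).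

Let hxs : 0 < x < b / 2.
Proof. apply hx. Qed.
Let hxl : Lc b x = l.
Proof. apply hx. Qed.

Lemma esf : sf b d = - m - x.
Proof. unfold sf, m, x. simpl. field. Qed.

Lemma sf_le0 : Derive (H b d) (- m - x) <= 0.
Proof. rewrite <- esf. apply deltabar_H; auto. Qed.

Lemma dom_sf : Hdom b d (- m - x).
Proof. unfold Hdom, m. lra. Qed.
Lemma dom_xm : Hdom b d (x - m).
Proof. unfold Hdom, m. lra. Qed.
Lemma dom_m : Hdom b d (- m).
Proof. unfold Hdom, m. lra. Qed.

Lemma Dc_G h : Gdom b h -> is_derive (G b) h (Derive (G b) h).
Proof. intros; apply Derive_correct, G_ex; auto. Qed.
Lemma Dc_H s : Hdom b d s -> is_derive (H b d) s (Derive (H b d) s).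
Proof. intros; apply Derive_correct, H_ex; auto. Qed.

Lemma qbar_pos : 0 < qbar.
Proof.
  unfold qbar. destruct (Rle_dec (2 * x) j) as [c|c].
  - rewrite <- (G_deriv0 b hb). apply (G_mono b hb 0 (2 * x)); try (unfold Gdom; lra).
    apply Dc_G; unfold Gdom; lra. apply Dc_G; unfold Gdom; lra.
  - assert (hmx : - x < m) by (unfold j, m in *; lra).
    set (sb := x - m).
    assert (D := Dc_H _ dom_xm). fold sb in D |- *.
    assert (I := H_ident b d hb hd sb _ dom_xm D). fold m in I. replace (sb + m) with x in I by (unfold sb; ring).
    rewrite hxl in I.
    destruct (Rtotal_order sb 0) as [neg|[zero|pos]].
    +
      assert (Jn := AI_jensen b sb (0 * sb + m) (Hdom_Ad b d hd sb dom_xm)).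
      change (AI b sb (0 * sb + m)) with (Wf b 0 (d - b / 2) sb) in Jn.
      rewrite <- (H_W b d hb hd sb dom_xm) in Jn.
      replace (sb / 2 + (0 * sb + m)) with ((x + m) / 2) in Jn by (unfold sb; field).
      assert (gt : l < Lc b ((x + m) / 2)).
      { rewrite <- hxl. apply Lc_incr_pos. lra. unfold sb in neg; lra. unfold m in *; lra. }
      assert (mn4 : sb * Derive (H b d) sb < 0) by lra.
      destruct (Rle_lt_dec (Derive (H b d) sb) 0) as [c2|c2]; auto.
      assert (mn5 : 0 <= sb * Derive (H b d) sb) by nra. lra.
    +
      assert (HD := H_deriv b d hb hd sb dom_xm).
      rewrite (is_derive_unique _ _ _ HD). rewrite zero. rewrite Wd_H0.
      assert (lpp : Lp b 0 < Lp b m). { apply Lp_incr; unfold inI, m in *; unfold sb in zero; lra. }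
      rewrite Lp_0 in lpp. unfold m in lpp. lra.
    +
      assert (d0 : Hdom b d 0) by (unfold Hdom; lra).
      assert (T := H_tan sb 0 _ dom_xm d0 D).
      rewrite (H_0 b d hb hd) in T. fold m in T.
      assert (lt : Lc b m < l).
      { rewrite <- hxl. apply Lc_abs_lt. apply Rabs_def1; unfold sb in pos; lra. lra. }
      assert (mn6 : 0 < sb * Derive (H b d) sb) by lra.
      destruct (Rle_lt_dec (Derive (H b d) sb) 0) as [c2|c2]; auto.
      assert (mn7 : sb * Derive (H b d) sb <= 0) by nra. lra.
Qed.

Lemma junc_eq : 0 <= j -> Derive (G b) j = Derive (H b d) j.
Proof. intros. unfold j. apply junction; auto. Qed.

Lemma Mgen q : 0 < q ->
  (qbar <= q -> l <= Lc b (ee q)) /\ (q <= qbar -> Lc b (ee q) <= l) /\ (q < qbar -> Lc b (ee q) < l).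
Proof.
  intros hq. destruct (ht_spec q hq) as [hh1 hh2]. destruct (sd_spec q hq) as [hs1 hs2].
  assert (gh : Gdom b (ht q)) by (unfold Gdom; lra).
  unfold ee, qbar. fold (ht q) (sd q).
  destruct (Rle_dec d (delta0 b q)) as [rg|rh]; destruct (Rle_dec (2 * x) j) as [ca|cb].
  -
    assert (g2x : Gdom b (2 * x)) by (unfold Gdom; lra).
    assert (D2 := Dc_G _ g2x).
    split; [|split]; intros c.
    + assert (mn8 : ht q >= 2 * x) by (apply Rle_ge, (G_le_of (2 * x) (ht q) _ _ g2x gh D2 hh2 c)).
      rewrite <- hxl. apply Lc_ge; lra.
    + assert (mn9 : ht q <= 2 * x) by (apply (G_le_of (ht q) (2 * x) _ _ gh g2x hh2 D2 c)).
      rewrite <- hxl. apply Lc_abs_le. rewrite Rabs_pos_eq; lra. lra.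
    + assert (mn10 : ht q < 2 * x) by (apply (G_lt_of (ht q) (2 * x) _ _ gh g2x hh2 D2 c)).
      rewrite <- hxl. apply Lc_abs_lt. rewrite Rabs_pos_eq; lra. lra.
  -
    assert (hj : ht q <= j) by (apply regG_iff; exact rg).
    assert (lt : Lc b (ht q / 2) < l).
    { rewrite <- hxl. apply Lc_abs_lt. rewrite Rabs_pos_eq; lra. lra. }
    split; [|split]; intros c; try lra.
    exfalso.
    assert (gj : Gdom b j) by (unfold Gdom, j; lra).
    assert (hjd : Hdom b d j) by (unfold Hdom, j; lra).
    assert (A := G_le_mono (ht q) j _ _ gh gj hh2 (Dc_G _ gj) hj).
    rewrite junc_eq in A by lra.
    assert (B := H_mono b d hb hd j (x - m) _ _ hjd dom_xm ltac:(unfold j, m in *; lra) (Dc_H _ hjd) (Dc_H _ dom_xm)).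
    lra.
  -
    assert (hj : j < ht q).
    { destruct (Rle_lt_dec (ht q) j) as [c|c]; auto. exfalso. apply rh. apply regG_iff. auto. }
    assert (g2x : Gdom b (2 * x)) by (unfold Gdom; lra).
    assert (D2 := Dc_G _ g2x).
    assert (gt : Derive (G b) (2 * x) < q).
    { destruct (Req_dec (2 * x) j) as [e|ne].
      - rewrite e. assert (gj : Gdom b j) by (unfold Gdom, j; lra).
        apply (G_mono b hb j (ht q)); auto. apply Dc_G; auto.
      - apply (G_mono b hb (2 * x) (ht q)); auto. lra. }
    split; [|split]; intros c; try lra.
    assert (gj : Gdom b j) by (unfold Gdom, j; lra).
    assert (hjd : Hdom b d j) by (unfold Hdom, j; lra).
    assert (A := G_mono b hb j (ht q) _ _ gj gh hj (Dc_G _ gj) hh2).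
    rewrite junc_eq in A by lra.
    assert (B := H_lt_of j (sd q) _ _ hjd hs1 (Dc_H _ hjd) hs2 A).
    rewrite <- hxl. apply Lc_ge. lra. unfold j, m in *; lra. unfold Hdom, m in *; lra.
  -
    assert (D := Dc_H _ dom_xm).
    assert (low : - m - x < sd q).
    { apply (H_lt_of (- m - x) (sd q) _ _ dom_sf hs1 (Dc_H _ dom_sf) hs2). generalize sf_le0; lra. }
    split; [|split]; intros c.
    + assert (mn11 : x - m <= sd q) by (apply (H_le_of (x - m) (sd q) _ _ dom_xm hs1 D hs2 c)).
      rewrite <- hxl. apply Lc_ge. lra. lra. unfold Hdom, m in *; lra.
    + assert (mn12 : sd q <= x - m) by (apply (H_le_of (sd q) (x - m) _ _ hs1 dom_xm hs2 D c)).
      rewrite <- hxl. apply Lc_abs_le. apply Rabs_le. lra. lra.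
    + assert (mn13 : sd q < x - m) by (apply (H_lt_of (sd q) (x - m) _ _ hs1 dom_xm hs2 D c)).
      rewrite <- hxl. apply Lc_abs_lt. apply Rabs_def1; lra. lra.
Qed.


Let hqb : 0 < qbar.
Proof. apply qbar_pos. Qed.
Let tb := sqrt qbar.
Let htb : 0 < tb.
Proof. apply sqrt_lt_R0. auto. Qed.
Let htb2 : tb * tb = qbar.
Proof. apply sqrt_sqrt. lra. Qed.

Lemma sq_le a c : 0 < a -> a <= c -> a * a <= c * c.
Proof. intros. nra. Qed.
Lemma sq_lt a c : 0 < a -> a < c -> a * a < c * c.
Proof. intros. nra. Qed.

Lemma inc t1 t2 : 0 < t1 -> t1 < t2 -> t2 <= tb -> gg t1 <= gg t2.
Proof.
  intros h1 h12 h2.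
  apply (part gg (b / t1) t1 t2). apply Rlt_le, Rdiv_lt_0_compat; auto. auto.
  intros a c ha hac hc.
  assert (a0 : 0 < a) by lra. assert (c0 : 0 < c) by lra.
  assert (S := step a c a0 c0).
  assert (cq : c * c <= qbar) by (rewrite <- htb2; apply sq_le; lra).
  destruct (Mgen (c * c) ltac:(nra)) as [_ [M2 _]].
  assert (D := M2 cq).
  assert (P : (Lc b (ee (c * c)) - l) * (1 / a - 1 / c) <= 0).
  { assert (0 <= 1 / a - 1 / c).
    { assert (1 / c < 1 / a) by (unfold Rdiv; rewrite !Rmult_1_l; apply Rinv_lt_contravar; nra). lra. }
    assert (0 <= (l - Lc b (ee (c * c))) * (1 / a - 1 / c)) by (apply Rmult_le_pos; lra). nra. }
  assert (Q : b * (c - a) * (c - a) / a <= b / t1 * (c - a) * (c - a)).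
  { assert (sq : 0 <= (c - a) * (c - a)) by apply Rle_0_sqr.
    assert (1 / a <= 1 / t1).
    { unfold Rdiv. rewrite !Rmult_1_l. destruct (Req_dec a t1). subst; lra. apply Rlt_le, Rinv_lt_contravar; nra. }
    replace (b * (c - a) * (c - a) / a) with (b * ((c - a) * (c - a)) * (1 / a)) by (field; lra).
    replace (b / t1 * (c - a) * (c - a)) with (b * ((c - a) * (c - a)) * (1 / t1)) by (field; lra).
    apply Rmult_le_compat_l; auto. apply Rmult_le_pos; lra. }
  lra.
Qed.

Lemma dec t1 t2 : tb <= t1 -> t1 < t2 -> gg t2 <= gg t1.
Proof.
  intros h1 h12.
  apply (part_rev gg (b / tb) t1 t2). apply Rlt_le, Rdiv_lt_0_compat; auto. auto.
  intros a c ha hac hc.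
  assert (a0 : 0 < a) by lra. assert (c0 : 0 < c) by lra.
  assert (S := step c a c0 a0).
  assert (aq : qbar <= a * a) by (rewrite <- htb2; apply sq_le; lra).
  destruct (Mgen (a * a) ltac:(nra)) as [M1 _].
  assert (D := M1 aq).
  assert (P : (Lc b (ee (a * a)) - l) * (1 / c - 1 / a) <= 0).
  { assert (0 <= 1 / a - 1 / c).
    { assert (1 / c < 1 / a) by (unfold Rdiv; rewrite !Rmult_1_l; apply Rinv_lt_contravar; nra). lra. }
    assert (0 <= (Lc b (ee (a * a)) - l) * (1 / a - 1 / c)) by (apply Rmult_le_pos; lra). nra. }
  assert (Q : b * (a - c) * (a - c) / c <= b / tb * (c - a) * (c - a)).
  { assert (sq : 0 <= (c - a) * (c - a)) by apply Rle_0_sqr.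
    assert (1 / c <= 1 / tb).
    { unfold Rdiv. rewrite !Rmult_1_l. apply Rlt_le, Rinv_lt_contravar; nra. }
    replace (b * (a - c) * (a - c) / c) with (b * ((c - a) * (c - a)) * (1 / c)) by (field; lra).
    replace (b / tb * (c - a) * (c - a)) with (b * ((c - a) * (c - a)) * (1 / tb)) by (field; lra).
    apply Rmult_le_compat_l; auto. apply Rmult_le_pos; lra. }
  lra.
Qed.

Lemma maxg t : 0 < t -> gg t <= gg tb.
Proof.
  intros ht0. destruct (Rtotal_order t tb) as [c|[c|c]].
  - apply inc; lra.
  - subst; lra.
  - apply dec; lra.
Qed.

Lemma Tq_gg q : 0 < q -> Tq b d q = gg (sqrt q).
Proof. intros hq. unfold gg. rewrite sqrt_sqrt; auto. lra. Qed.

Lemma is_max : is_maximizer b d qbar.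
Proof.
  split; auto. intros q' hq'. rewrite (Tq_gg q' hq'), (Tq_gg qbar hqb). fold tb.
  apply maxg. apply sqrt_lt_R0; auto.
Qed.

Lemma max_ge q : is_maximizer b d q -> qbar <= q.
Proof.
  intros [hq hmax]. destruct (Rle_lt_dec qbar q) as [ok|bad]; auto. exfalso.
  set (t := sqrt q).
  assert (ht0 : 0 < t) by (apply sqrt_lt_R0; auto).
  assert (htt : t < tb). { apply sqrt_lt_1; lra. }
  assert (Gt : gg tb <= gg t).
  { unfold t, tb. rewrite <- (Tq_gg q hq). rewrite <- (Tq_gg qbar hqb). apply hmax; auto. }
  set (c := (t + tb) / 2).
  assert (hc : t < c < tb) by (unfold c; lra).
  assert (Gc : gg c <= gg tb) by (apply inc; lra).
  assert (cq : c * c < qbar) by (rewrite <- htb2; apply sq_lt; lra).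
  destruct (Mgen (c * c) ltac:(nra)) as [_ [_ M3]].
  assert (Dn := M3 cq).
  set (Dc := Lc b (ee (c * c)) - l) in *.
  assert (hDc : Dc < 0) by (unfold Dc; lra).
  set (eta := Rmin ((c - t) / 2) (- Dc / (2 * b * c))).
  assert (he0 : 0 < eta).
  { unfold eta. apply Rmin_glb_lt. lra. apply Rdiv_lt_0_compat. lra. assert (0 < b * c) by nra. lra. }
  assert (he1 : eta <= (c - t) / 2) by apply Rmin_l.
  assert (he2 : eta <= - Dc / (2 * b * c)) by apply Rmin_r.
  set (a := c - eta).
  assert (ha : t <= a < c) by (unfold a; lra).
  assert (Ga : gg t <= gg a).
  { destruct (Req_dec t a) as [e|ne]. rewrite e; lra. apply inc; lra. }
  assert (S := step a c ltac:(lra) ltac:(lra)). fold Dc in S.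
  assert (E : Dc * (1 / a - 1 / c) + b * (c - a) * (c - a) / a = (eta / a) * (Dc / c + b * eta)).
  { unfold a. field. split; lra. }
  assert (N1 : Dc / c + b * eta < 0).
  { assert (be : b * eta <= b * (- Dc / (2 * b * c))) by (apply Rmult_le_compat_l; lra).
    replace (b * (- Dc / (2 * b * c))) with (- (Dc / c) / 2) in be by (field; lra).
    assert (Dc / c < 0). { apply Rdiv_neg_pos; lra. } lra. }
  assert (N2 : 0 < eta / a) by (apply Rdiv_lt_0_compat; lra).
  assert (N3 : eta / a * (Dc / c + b * eta) < 0).
  { assert (0 < eta / a * (- (Dc / c + b * eta))) by (apply Rmult_lt_0_compat; lra). nra. }
  lra.
Qed.

Lemma Hm_lt : Derive (H b d) (- m) < qbar.
Proof.
  unfold qbar. destruct (Rle_dec (2 * x) j) as [ca|cb].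
  - assert (hm : m < 0) by (unfold j, m in *; lra).
    assert (D := Dc_H _ dom_m).
    assert (I := H_ident b d hb hd _ _ dom_m D). fold m in I. replace (- m + m) with 0 in I by ring.
    rewrite Lc_0 in I. assert (nn : 0 <= H b d (- m)) by (apply H_nonneg; auto; apply dom_m).
    assert (neg : Derive (H b d) (- m) <= 0).
    { destruct (Rle_lt_dec (Derive (H b d) (- m)) 0) as [c|c]; auto.
      assert (0 < - m * Derive (H b d) (- m)) by (apply Rmult_lt_0_compat; lra). lra. }
    assert (P := qbar_pos). unfold qbar in P. destruct (Rle_dec (2 * x) j); [|contradiction]. lra.
  - apply (H_mono b d hb hd (- m) (x - m)); auto. apply dom_m. apply dom_xm. lra.
    apply Dc_H, dom_m. apply Dc_H, dom_xm.
Qed.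

Lemma qstar_lt q : is_maximizer b d q -> Rbar_lt (qstar b d) (Finite q).
Proof.
  intros hm. assert (hq := max_ge q hm).
  set (Hm := Derive (H b d) (- m)).
  assert (hHm : Hm < qbar) by apply Hm_lt.
  set (q0 := (Rmax 0 Hm + qbar) / 2).
  assert (r0 := Rmax_l 0 Hm). assert (r1 := Rmax_r 0 Hm).
  assert (hlt : Rmax 0 Hm < qbar) by (apply Rmax_lub_lt; lra).
  assert (hq0 : 0 < q0) by (unfold q0; lra).
  destruct (sd_spec q0 hq0) as [s1 s2].
  assert (gt : - m < sd q0).
  { apply (H_lt_of (- m) (sd q0) Hm q0 dom_m s1 (Dc_H _ dom_m) s2). unfold q0; lra. }
  assert (inS : 0 < q0 /\ d - b / 2 + s_delta b d q0 >= 0).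
  { split; auto. fold (sd q0). unfold m in gt. lra. }
  destruct (Glb_Rbar_correct (fun q => 0 < q /\ d - b / 2 + s_delta b d q >= 0)) as [lb _].
  specialize (lb q0 inS). unfold qstar.
  apply (Rbar_le_lt_trans _ _ _ lb). simpl. unfold q0; lra.
Qed.

End Main.

Theorem mainTheorem17 (beta delta : R) :
  beta > beta_c ->
  0 < delta < beta ->
  Rbar_le (Finite delta) (deltabar beta) ->
  (exists q, is_maximizer beta delta q) /\
  (forall q, is_maximizer beta delta q -> Rbar_lt (qstar beta delta) (Finite q)).
Proof.
  intros h1 h2 h3. split.
  - eexists. apply is_max; auto.
  - intros q hq. apply (qstar_lt beta delta h1 h2 h3 q hq).
Qed.
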